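(* For every acute triangle $ABC$ in which $BC$ is strictly the shortest side ($a<b$ and $a<c$), the distances from vertex $A$ satisfy $$AX_3<AX_9<AX_{10}<AX_2<AX_1<AX_6<AX_4<AX_{19}<AX_{16}.$$ Equivalently, in the vertex order, $X_3\prec X_9\prec X_{10}\prec X_2\prec X_1\prec X_6\prec X_4\prec X_{19}\prec X_{16}$.
   Context: $X_n$ denotes the $n$-th triangle center listed in Kimberling's Encyclopedia of Triangle Centers (ETC), given by barycentric coordinates in terms of $a=BC$, $b=CA$, $c=AB$. The vertex order is defined by: $P\prec Q$ if $P$ is closer to $A$ than $Q$ in every acute triangle $ABC$ with shortest side $BC$ (i.e. $a<b$, $a<c$). *)

(* Defs.v *)
From mathcomp Require Import all_boot all_order all_algebra.
Set Implicit Arguments. Unset Strict Implicit. Unset Printing Implicit Defensive.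
Import Order.TTheory GRing.Theory Num.Theory.
Local Open Scope ring_scope.

Section Triangle.
Variable R : rcfType.

Definition point := (R * R)%type.

Definition dist (P Q : point) : R :=
  Num.sqrt ((P.1 - Q.1) ^+ 2 + (P.2 - Q.2) ^+ 2).

Definition dotv (O P Q : point) : R :=
  (P.1 - O.1) * (Q.1 - O.1) + (P.2 - O.2) * (Q.2 - O.2).

Definition crossv (O P Q : point) : R :=
  (P.1 - O.1) * (Q.2 - O.2) - (P.2 - O.2) * (Q.1 - O.1).

Definition acute_triangle (A B C : point) : Prop :=
  [/\ crossv A B C != 0, 0 < dotv A B C, 0 < dotv B C A & 0 < dotv C A B].

(* Point with homogeneous barycentric coordinates f(a,b,c) : f(b,c,a) : f(c,a,b)
   (ETC convention), where a = BC, b = CA, c = AB. *)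
Definition bary (f : R -> R -> R -> R) (A B C : point) : point :=
  let a := dist B C in let b := dist C A in let c := dist A B in
  let u := f a b c in let v := f b c a in let w := f c a b in
  let s := u + v + w in
  ((u * A.1 + v * B.1 + w * C.1) / s, (u * A.2 + v * B.2 + w * C.2) / s).

(* S = twice the area, from Heron's formula; SA = (b^2 + c^2 - a^2)/2 *)
Definition Sarea (a b c : R) : R :=
  Num.sqrt (2 * a^+2 * b^+2 + 2 * b^+2 * c^+2 + 2 * c^+2 * a^+2
            - a^+4 - b^+4 - c^+4) / 2.
Definition SA (a b c : R) : R := (b ^+ 2 + c ^+ 2 - a ^+ 2) / 2.

(* first barycentric coordinates (triangle center functions) from ETC *)
Definition X1 (a b c : R) : R := a.                                   (* incenter *)
Definition X2 (a b c : R) : R := 1.                                   (* centroid *)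
Definition X3 (a b c : R) : R := a ^+ 2 * (b ^+ 2 + c ^+ 2 - a ^+ 2). (* circumcenter *)
Definition X4 (a b c : R) : R := (b ^+ 2 + c ^+ 2 - a ^+ 2)^-1.      (* orthocenter *)
Definition X6 (a b c : R) : R := a ^+ 2.                              (* symmedian point *)
Definition X9 (a b c : R) : R := a * (b + c - a).                     (* Mittenpunkt *)
Definition X10 (a b c : R) : R := b + c.                              (* Spieker center *)
Definition X16 (a b c : R) : R :=                                     (* 2nd isodynamic point *)
  a ^+ 2 * (Sarea a b c - Num.sqrt 3 * SA a b c).  (* ~ sin A sin(A - pi/3) *)
Definition X19 (a b c : R) : R := a / (b ^+ 2 + c ^+ 2 - a ^+ 2).    (* Clawson point *)

End Triangle.

(* Main.v *)
Require Import Defs.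
From mathcomp Require Import all_boot all_order all_algebra.
From mathcomp Require Import ring lra.
Import Order.TTheory GRing.Theory Num.Theory.
Local Open Scope ring_scope.

Lemma pos_addl (R : rcfType) (x y : R) : 0 < x -> 0 <= y -> 0 < x + y.
Proof. move=> hx hy; exact: ltr_wpDr. Qed.

Lemma pos_eq (R : rcfType) (x y : R) : x = y -> 0 < y -> 0 < x.
Proof. by move=> ->. Qed.

Lemma frac_lt (R : rcfType) (x1 y1 x2 y2 : R) :
  0 < y1 -> 0 < y2 -> 0 < x2 * y1 - x1 * y2 -> x1 / y1 < x2 / y2.
Proof.
move=> h1 h2 h; rewrite ltr_pdivrMr // mulrAC ltr_pdivlMr //.
by rewrite -subr_gt0.
Qed.

Ltac posi := first [ assumption
  | apply: pos_addl; [posi | nneg]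
  | apply: mulr_gt0; posi
  | apply: exprn_gt0; posi
  | by rewrite ltr0n ]
with nneg := first [ assumption | apply: ltW; assumption
  | apply: addr_ge0; nneg
  | apply: mulr_ge0; nneg
  | apply: exprn_ge0; nneg
  | exact: ler0n ].
Definition n3 {R : rcfType} (a b c : R) : R := a ^+ 2 * b ^+ 2 * c ^+ 2.
Definition d3 {R : rcfType} (a b c : R) : R := - a ^+ 4 + 2%:R * a ^+ 2 * b ^+ 2 + 2%:R * a ^+ 2 * c ^+ 2 - b ^+ 4 + 2%:R * b ^+ 2 * c ^+ 2 - c ^+ 4.
Definition n9 {R : rcfType} (a b c : R) : R := - a ^+ 4 * b * c + 2%:R * a ^+ 2 * b ^+ 3 * c + 2%:R * a ^+ 2 * b * c ^+ 3 - b ^+ 5 * c + 4%:R * b ^+ 4 * c ^+ 2 - 6%:R * b ^+ 3 * c ^+ 3 + 4%:R * b ^+ 2 * c ^+ 4 - b * c ^+ 5.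
Definition d9 {R : rcfType} (a b c : R) : R := a ^+ 4 - 4%:R * a ^+ 3 * b - 4%:R * a ^+ 3 * c + 6%:R * a ^+ 2 * b ^+ 2 + 4%:R * a ^+ 2 * b * c + 6%:R * a ^+ 2 * c ^+ 2 - 4%:R * a * b ^+ 3 + 4%:R * a * b ^+ 2 * c + 4%:R * a * b * c ^+ 2 - 4%:R * a * c ^+ 3 + b ^+ 4 - 4%:R * b ^+ 3 * c + 6%:R * b ^+ 2 * c ^+ 2 - 4%:R * b * c ^+ 3 + c ^+ 4.
Definition n10 {R : rcfType} (a b c : R) : R := - a ^+ 3 + 2%:R * a * b ^+ 2 - a * b * c + 2%:R * a * c ^+ 2 + b ^+ 3 + c ^+ 3.
Definition d10 {R : rcfType} (a b c : R) : R := 4%:R * a + 4%:R * b + 4%:R * c.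
Definition n2 {R : rcfType} (a b c : R) : R := - a ^+ 2 + 2%:R * b ^+ 2 + 2%:R * c ^+ 2.
Definition d2 {R : rcfType} (a b c : R) : R := 9%:R.
Definition n1 {R : rcfType} (a b c : R) : R := - a * b * c + b ^+ 2 * c + b * c ^+ 2.
Definition d1 {R : rcfType} (a b c : R) : R := a + b + c.
Definition n6 {R : rcfType} (a b c : R) : R := - a ^+ 2 * b ^+ 2 * c ^+ 2 + 2%:R * b ^+ 4 * c ^+ 2 + 2%:R * b ^+ 2 * c ^+ 4.
Definition d6 {R : rcfType} (a b c : R) : R := a ^+ 4 + 2%:R * a ^+ 2 * b ^+ 2 + 2%:R * a ^+ 2 * c ^+ 2 + b ^+ 4 + 2%:R * b ^+ 2 * c ^+ 2 + c ^+ 4.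
Definition n4 {R : rcfType} (a b c : R) : R := a ^+ 6 - 2%:R * a ^+ 4 * b ^+ 2 - 2%:R * a ^+ 4 * c ^+ 2 + a ^+ 2 * b ^+ 4 + 2%:R * a ^+ 2 * b ^+ 2 * c ^+ 2 + a ^+ 2 * c ^+ 4.
Definition d4 {R : rcfType} (a b c : R) : R := - a ^+ 4 + 2%:R * a ^+ 2 * b ^+ 2 + 2%:R * a ^+ 2 * c ^+ 2 - b ^+ 4 + 2%:R * b ^+ 2 * c ^+ 2 - c ^+ 4.
Definition n19 {R : rcfType} (a b c : R) : R := - a ^+ 10 * b * c + 3%:R * a ^+ 8 * b ^+ 3 * c + 2%:R * a ^+ 8 * b ^+ 2 * c ^+ 2 + 3%:R * a ^+ 8 * b * c ^+ 3 - 2%:R * a ^+ 6 * b ^+ 5 * c - 4%:R * a ^+ 6 * b ^+ 4 * c ^+ 2 - 8%:R * a ^+ 6 * b ^+ 3 * c ^+ 3 - 4%:R * a ^+ 6 * b ^+ 2 * c ^+ 4 - 2%:R * a ^+ 6 * b * c ^+ 5 - 2%:R * a ^+ 4 * b ^+ 7 * c + 4%:R * a ^+ 4 * b ^+ 6 * c ^+ 2 + 6%:R * a ^+ 4 * b ^+ 5 * c ^+ 3 + 6%:R * a ^+ 4 * b ^+ 3 * c ^+ 5 + 4%:R * a ^+ 4 * b ^+ 2 * c ^+ 6 - 2%:R * a ^+ 4 * b * c ^+ 7 + 3%:R * a ^+ 2 * b ^+ 9 * c - 4%:R * a ^+ 2 * b ^+ 8 * c ^+ 2 + 4%:R * a ^+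 2 * b ^+ 6 * c ^+ 4 - 6%:R * a ^+ 2 * b ^+ 5 * c ^+ 5 + 4%:R * a ^+ 2 * b ^+ 4 * c ^+ 6 - 4%:R * a ^+ 2 * b ^+ 2 * c ^+ 8 + 3%:R * a ^+ 2 * b * c ^+ 9 - b ^+ 11 * c + 2%:R * b ^+ 10 * c ^+ 2 - b ^+ 9 * c ^+ 3 + 2%:R * b ^+ 7 * c ^+ 5 - 4%:R * b ^+ 6 * c ^+ 6 + 2%:R * b ^+ 5 * c ^+ 7 - b ^+ 3 * c ^+ 9 + 2%:R * b ^+ 2 * c ^+ 10 - b * c ^+ 11.
Definition d19 {R : rcfType} (a b c : R) : R := a ^+ 10 - 2%:R * a ^+ 9 * b - 2%:R * a ^+ 9 * c + a ^+ 8 * b ^+ 2 + 2%:R * a ^+ 8 * b * c + a ^+ 8 * c ^+ 2 + 4%:R * a ^+ 7 * b ^+ 2 * c + 4%:R * a ^+ 7 * b * c ^+ 2 - 2%:R * a ^+ 6 * b ^+ 4 - 4%:R * a ^+ 6 * b ^+ 3 * c - 4%:R * a ^+ 6 * b ^+ 2 * c ^+ 2 - 4%:R * a ^+ 6 * b * c ^+ 3 - 2%:R * a ^+ 6 * c ^+ 4 + 4%:R * a ^+ 5 * b ^+ 5 - 4%:R * a ^+ 5 * b ^+ 3 * c ^+ 2 - 4%:R * a ^+ 5 * b ^+ 2 * c ^+ 3 + 4%:R * a ^+ 5 * c ^+ 5 - 2%:R * a ^+ 4 * b ^+ 6 + 6%:R * a ^+ 4 * b ^+ 4 * c ^+ 2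 + 8%:R * a ^+ 4 * b ^+ 3 * c ^+ 3 + 6%:R * a ^+ 4 * b ^+ 2 * c ^+ 4 - 2%:R * a ^+ 4 * c ^+ 6 - 4%:R * a ^+ 3 * b ^+ 6 * c - 4%:R * a ^+ 3 * b ^+ 5 * c ^+ 2 + 8%:R * a ^+ 3 * b ^+ 4 * c ^+ 3 + 8%:R * a ^+ 3 * b ^+ 3 * c ^+ 4 - 4%:R * a ^+ 3 * b ^+ 2 * c ^+ 5 - 4%:R * a ^+ 3 * b * c ^+ 6 + a ^+ 2 * b ^+ 8 + 4%:R * a ^+ 2 * b ^+ 7 * c - 4%:R * a ^+ 2 * b ^+ 6 * c ^+ 2 - 4%:R * a ^+ 2 * b ^+ 5 * c ^+ 3 + 6%:R * a ^+ 2 * b ^+ 4 * c ^+ 4 - 4%:R * a ^+ 2 * b ^+ 3 * c ^+ 5 - 4%:R * a ^+ 2 * b ^+ 2 * c ^+ 6 + 4%:R * a ^+ 2 * b * c ^+ 7 + a ^+ 2 * c ^+ 8 - 2%:R * a * b ^+ 9 + 2%:R * a * b ^+ 8 * c + 4%:R * a * b ^+ 7 * c ^+ 2 - 4%:R * a * b ^+ 6 * c ^+ 3 - 4%:R * a * b ^+ 3 * c ^+ 6 + 4%:R * a * b ^+ 2 * c ^+ 7 + 2%:R * a * b * c ^+ 8 - 2%:R * a * c ^+ 9 + b ^+ 10 - 2%:R * b ^+ 9 * c + b ^+ 8 * c ^+ 2 - 2%:R * b ^+ 6 * c ^+ 4 + 4%:R * b ^+ 5 * c ^+ 5 - 2%:R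 * b ^+ 4 * c ^+ 6 + b ^+ 2 * c ^+ 8 - 2%:R * b * c ^+ 9 + c ^+ 10.
Definition naux {R : rcfType} (a b c : R) : R := 2%:R * a * b ^+ 3 * c ^+ 2 + 2%:R * a * b ^+ 2 * c ^+ 3 + 2%:R * b ^+ 3 * c ^+ 3.
Definition daux {R : rcfType} (a b c : R) : R := 3%:R * a ^+ 4 + a ^+ 3 * b + a ^+ 3 * c - 6%:R * a ^+ 2 * b ^+ 2 + a ^+ 2 * b * c - 6%:R * a ^+ 2 * c ^+ 2 + a * b ^+ 3 + a * b ^+ 2 * c + a * b * c ^+ 2 + a * c ^+ 3 + 3%:R * b ^+ 4 + b ^+ 3 * c - 6%:R * b ^+ 2 * c ^+ 2 + b * c ^+ 3 + 3%:R * c ^+ 4.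

Lemma pr_3_9 (R : rcfType) (a b c z s k : R) : a = 2%:R * z + s -> b = 2%:R * z + s + k -> c = 2%:R * z + 2%:R * s + k -> 0 < z -> 0 <= s -> 0 < k -> 0 < (2%:R * z ^+ 2 - s ^+ 2 - s * k) ->
  n3 a b c / d3 a b c < n9 a b c / d9 a b c.
Proof.
move=> ea eb ec hz hs hk hm; subst a b c.
apply: frac_lt.
- apply: (@pos_eq _ _ (((16%:R * (z ^+ 2 * k ^+ 2)) + ((64%:R * (z ^+ 3 * k)) + ((48%:R * z ^+ 4) + ((16%:R * (z * (s * k ^+ 2))) + ((48%:R * (z * (s ^+ 2 * k))) + ((32%:R * (z * s ^+ 3)) + ((112%:R * (z ^+ 2 * (s * k))) + ((112%:R * (z ^+ 2 * s ^+ 2)) + (128%:R * (z ^+ 3 * s)))))))))))); [rewrite /d3; ring | posi].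
- apply: (@pos_eq _ _ (((64%:R * (z ^+ 2 * k ^+ 2)) + ((192%:R * (z ^+ 3 * k)) + ((144%:R * z ^+ 4) + ((16%:R * (s ^+ 2 * k ^+ 2)) + ((32%:R * (s ^+ 3 * k)) + ((16%:R * s ^+ 4) + ((64%:R * (z * (s * k ^+ 2))) + ((192%:R * (z * (s ^+ 2 * k))) + ((128%:R * (z * s ^+ 3)) + ((352%:R * (z ^+ 2 * (s * k))) + ((352%:R * (z ^+ 2 * s ^+ 2)) + (384%:R * (z ^+ 3 * s))))))))))))))); [rewrite /d9; ring | posi].
- apply: (@pos_eq _ _ (((k + ((2%:R * z) + s)) * ((k + ((2%:R * z) + (2%:R * s))) * ((120%:R * (k ^+ 2 * (2%:R * z ^+ 2 - s ^+ 2 - s * k) ^+ 3)) + ((96%:R * (z * (k * (2%:R * z ^+ 2 - s ^+ 2 - s * k) ^+ 3))) + ((64%:R * (z * (k ^+ 3 * (2%:R * z ^+ 2 - s ^+ 2 - s * k) ^+ 2))) + ((456%:R * (s * (k * (2%:R * z ^+ 2 - s ^+ 2 - s * k) ^+ 3))) + ((520%:R * (s * (k ^+ 3 * (2%:R * z ^+ 2 - s ^+ 2 - s * k) ^+ 2))) + ((216%:R * (s ^+ 2 * (2%:R * z ^+ 2 - s ^+ 2 - s * k) ^+ 3)) + (((2%:R * 1000%:R + 636%:R) * (s ^+ 2 * (k ^+ 2 * (2%:R * z ^+ 2 - s ^+ 2 - s * k) ^+ 2))) + ((648%:R * (s ^+ 2 * (k ^+ 4 * (2%:R * z ^+ 2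 - s ^+ 2 - s * k)))) + (((3%:R * 1000%:R + 364%:R) * (s ^+ 3 * (k * (2%:R * z ^+ 2 - s ^+ 2 - s * k) ^+ 2))) + (((3%:R * 1000%:R + 984%:R) * (s ^+ 3 * (k ^+ 3 * (2%:R * z ^+ 2 - s ^+ 2 - s * k)))) + ((248%:R * (s ^+ 3 * k ^+ 5)) + (((1%:R * 1000%:R + 216%:R) * (s ^+ 4 * (2%:R * z ^+ 2 - s ^+ 2 - s * k) ^+ 2)) + (((7%:R * 1000%:R + 680%:R) * (s ^+ 4 * (k ^+ 2 * (2%:R * z ^+ 2 - s ^+ 2 - s * k)))) + (((1%:R * 1000%:R + 756%:R) * (s ^+ 4 * k ^+ 4)) + (((5%:R * 1000%:R + 936%:R) * (s ^+ 5 * (k * (2%:R * z ^+ 2 - s ^+ 2 - s * k)))) + (((4%:R * 1000%:R + 372%:R) * (s ^+ 5 * k ^+ 3)) + (((1%:R * 1000%:R + 592%:R) * (s ^+ 6 * (2%:R * z ^+ 2 - s ^+ 2 - s * k))) + (((5%:R * 1000%:R + 28%:R) * (s ^+ 6 * k ^+ 2)) + (((2%:R * 1000%:R + 724%:R) * (s ^+ 7 * k)) + ((560%:R * s ^+ 8) + ((48%:R * (z * (s * (2%:R * z ^+ 2 - s ^+ 2 - s * k) ^+ 3))) + (((1%:R * 1000%:R + 104%:R) * (z * (s * (k ^+ 2 * (2%:R * z ^+ 2 - s ^+ 2 - s * k) ^+ 2)))) + ((128%:R * (z * (s * (k ^+ 4 * (2%:R * z ^+ 2 - s ^+ 2 -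 s * k))))) + (((2%:R * 1000%:R + 96%:R) * (z * (s ^+ 2 * (k * (2%:R * z ^+ 2 - s ^+ 2 - s * k) ^+ 2)))) + (((2%:R * 1000%:R + 144%:R) * (z * (s ^+ 2 * (k ^+ 3 * (2%:R * z ^+ 2 - s ^+ 2 - s * k))))) + ((64%:R * (z * (s ^+ 2 * k ^+ 5))) + ((888%:R * (z * (s ^+ 3 * (2%:R * z ^+ 2 - s ^+ 2 - s * k) ^+ 2))) + (((6%:R * 1000%:R + 96%:R) * (z * (s ^+ 3 * (k ^+ 2 * (2%:R * z ^+ 2 - s ^+ 2 - s * k))))) + (((1%:R * 1000%:R + 72%:R) * (z * (s ^+ 3 * k ^+ 4))) + (((5%:R * 1000%:R + 936%:R) * (z * (s ^+ 4 * (k * (2%:R * z ^+ 2 - s ^+ 2 - s * k))))) + (((3%:R * 1000%:R + 824%:R) * (z * (s ^+ 4 * k ^+ 3))) + (((1%:R * 1000%:R + 856%:R) * (z * (s ^+ 5 * (2%:R * z ^+ 2 - s ^+ 2 - s * k)))) + (((5%:R * 1000%:R + 480%:R) * (z * (s ^+ 5 * k ^+ 2))) + (((3%:R * 1000%:R + 456%:R) * (z * (s ^+ 6 * k))) + (792%:R * (z * s ^+ 7)))))))))))))))))))))))))))))))))))))))); [rewrite /n3 /d3 /n9 /d9; ring | posi].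
Qed.

Lemma pr_9_10 (R : rcfType) (a b c z s k : R) : a = 2%:R * z + s -> b = 2%:R * z + s + k -> c = 2%:R * z + 2%:R * s + k -> 0 < z -> 0 <= s -> 0 < k -> 0 < (2%:R * z ^+ 2 - s ^+ 2 - s * k) ->
  n9 a b c / d9 a b c < n10 a b c / d10 a b c.
Proof.
move=> ea eb ec hz hs hk hm; subst a b c.
apply: frac_lt.
- apply: (@pos_eq _ _ (((64%:R * (z ^+ 2 * k ^+ 2)) + ((192%:R * (z ^+ 3 * k)) + ((144%:R * z ^+ 4) + ((16%:R * (s ^+ 2 * k ^+ 2)) + ((32%:R * (s ^+ 3 * k)) + ((16%:R * s ^+ 4) + ((64%:R * (z * (s * k ^+ 2))) + ((192%:R * (z * (s ^+ 2 * k))) + ((128%:R * (z * s ^+ 3)) + ((352%:R * (z ^+ 2 * (s * k))) + ((352%:R * (z ^+ 2 * s ^+ 2)) + (384%:R * (z ^+ 3 * s))))))))))))))); [rewrite /d9; ring | posi].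
- apply: (@pos_eq _ _ (((8%:R * k) + ((24%:R * z) + (16%:R * s))))); [rewrite /d10; ring | posi].
- apply: (@pos_eq _ _ ((((2%:R * k) + ((2%:R * z) + (2%:R * s))) * ((2%:R * z) * (((2%:R * z) + (2%:R * s)) * ((16%:R * (z * k ^+ 3)) + ((84%:R * (z ^+ 2 * k ^+ 2)) + ((96%:R * (z ^+ 3 * k)) + ((8%:R * (s * k ^+ 3)) + ((28%:R * (s ^+ 2 * k ^+ 2)) + ((24%:R * (s ^+ 3 * k)) + ((4%:R * s ^+ 4) + ((108%:R * (z * (s * k ^+ 2))) + ((148%:R * (z * (s ^+ 2 * k))) + ((40%:R * (z * s ^+ 3)) + ((228%:R * (z ^+ 2 * (s * k))) + ((84%:R * (z ^+ 2 * s ^+ 2)) + (48%:R * (z ^+ 3 * s))))))))))))))))))); [rewrite /n9 /d9 /n10 /d10; ring | posi].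
Qed.

Lemma pr_10_2 (R : rcfType) (a b c z s k : R) : a = 2%:R * z + s -> b = 2%:R * z + s + k -> c = 2%:R * z + 2%:R * s + k -> 0 < z -> 0 <= s -> 0 < k -> 0 < (2%:R * z ^+ 2 - s ^+ 2 - s * k) ->
  n10 a b c / d10 a b c < n2 a b c / d2 a b c.
Proof.
move=> ea eb ec hz hs hk hm; subst a b c.
apply: frac_lt.
- apply: (@pos_eq _ _ (((8%:R * k) + ((24%:R * z) + (16%:R * s))))); [rewrite /d10; ring | posi].
- apply: (@pos_eq _ _ (9%:R)); [rewrite /d2; ring | posi].
- apply: (@pos_eq _ _ (((14%:R * k ^+ 3) + ((62%:R * (z * k ^+ 2)) + ((48%:R * (z ^+ 2 * k)) + ((52%:R * (s * k ^+ 2)) + ((48%:R * (s ^+ 2 * k)) + ((110%:R * (z * (s * k))) + ((14%:R * (z * s ^+ 2)) + (24%:R * (z ^+ 2 * s))))))))))); [rewrite /n10 /d10 /n2 /d2; ring | posi].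
Qed.

Lemma pr_2_1 (R : rcfType) (a b c z s k : R) : a = 2%:R * z + s -> b = 2%:R * z + s + k -> c = 2%:R * z + 2%:R * s + k -> 0 < z -> 0 <= s -> 0 < k -> 0 < (2%:R * z ^+ 2 - s ^+ 2 - s * k) ->
  n2 a b c / d2 a b c < n1 a b c / d1 a b c.
Proof.
move=> ea eb ec hz hs hk hm; subst a b c.
apply: frac_lt.
- apply: (@pos_eq _ _ (9%:R)); [rewrite /d2; ring | posi].
- apply: (@pos_eq _ _ (((2%:R * k) + ((6%:R * z) + (4%:R * s))))); [rewrite /d1; ring | posi].
- apply: (@pos_eq _ _ (((10%:R * k ^+ 3) + ((34%:R * (z * k ^+ 2)) + ((24%:R * (z ^+ 2 * k)) + ((32%:R * (s * k ^+ 2)) + ((24%:R * (s ^+ 2 * k)) + ((58%:R * (z * (s * k))) + ((10%:R * (z * s ^+ 2)) + (12%:R * (z ^+ 2 * s))))))))))); [rewrite /n2 /d2 /n1 /d1; ring | posi].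
Qed.

Lemma pr_1_6 (R : rcfType) (a b c z s k : R) : a = 2%:R * z + s -> b = 2%:R * z + s + k -> c = 2%:R * z + 2%:R * s + k -> 0 < z -> 0 <= s -> 0 < k -> 0 < (2%:R * z ^+ 2 - s ^+ 2 - s * k) ->
  n1 a b c / d1 a b c < n6 a b c / d6 a b c.
Proof.
move=> ea eb ec hz hs hk hm; subst a b c.
apply: frac_lt.
- apply: (@pos_eq _ _ (((2%:R * k) + ((6%:R * z) + (4%:R * s))))); [rewrite /d1; ring | posi].
- apply: (@pos_eq _ _ (((4%:R * k ^+ 4) + ((32%:R * (z * k ^+ 3)) + ((112%:R * (z ^+ 2 * k ^+ 2)) + ((192%:R * (z ^+ 3 * k)) + ((144%:R * z ^+ 4) + ((24%:R * (s * k ^+ 3)) + ((60%:R * (s ^+ 2 * k ^+ 2)) + ((72%:R * (s ^+ 3 * k)) + ((36%:R * s ^+ 4) + ((160%:R * (z * (s * k ^+ 2))) + ((288%:R * (z * (s ^+ 2 * k))) + ((192%:R * (z * s ^+ 3)) + ((400%:R * (z ^+ 2 * (s * k))) + ((400%:R * (z ^+ 2 * s ^+ 2)) + (384%:R * (z ^+ 3 * s)))))))))))))))))); [rewrite /d6; ring | posi].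
- apply: (@pos_eq _ _ (((k + ((2%:R * z) + s)) * ((k + ((2%:R * z) + (2%:R * s))) * ((16%:R * (z * k ^+ 4)) + ((88%:R * (z ^+ 2 * k ^+ 3)) + ((168%:R * (z ^+ 3 * k ^+ 2)) + ((96%:R * (z ^+ 4 * k)) + ((8%:R * (s * k ^+ 4)) + ((34%:R * (s ^+ 2 * k ^+ 3)) + ((50%:R * (s ^+ 3 * k ^+ 2)) + ((24%:R * (s ^+ 4 * k)) + ((120%:R * (z * (s * k ^+ 3))) + ((262%:R * (z * (s ^+ 2 * k ^+ 2))) + ((190%:R * (z * (s ^+ 3 * k))) + ((28%:R * (z * s ^+ 4)) + ((384%:R * (z ^+ 2 * (s * k ^+ 2))) + ((424%:R * (z ^+ 2 * (s ^+ 2 * k))) + ((100%:R * (z ^+ 2 * s ^+ 3)) + ((360%:R * (z ^+ 3 * (s * k))) + ((120%:R * (z ^+ 3 * s ^+ 2)) + (48%:R * (z ^+ 4 * s))))))))))))))))))))))); [rewrite /n1 /d1 /n6 /d6; ring | posi].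
Qed.

Lemma pr_6_4 (R : rcfType) (a b c z s k : R) : a = 2%:R * z + s -> b = 2%:R * z + s + k -> c = 2%:R * z + 2%:R * s + k -> 0 < z -> 0 <= s -> 0 < k -> 0 < (2%:R * z ^+ 2 - s ^+ 2 - s * k) ->
  n6 a b c / d6 a b c < n4 a b c / d4 a b c.
Proof.
move=> ea eb ec hz hs hk hm; subst a b c.
apply: frac_lt.
- apply: (@pos_eq _ _ (((4%:R * k ^+ 4) + ((32%:R * (z * k ^+ 3)) + ((112%:R * (z ^+ 2 * k ^+ 2)) + ((192%:R * (z ^+ 3 * k)) + ((144%:R * z ^+ 4) + ((24%:R * (s * k ^+ 3)) + ((60%:R * (s ^+ 2 * k ^+ 2)) + ((72%:R * (s ^+ 3 * k)) + ((36%:R * s ^+ 4) + ((160%:R * (z * (s * k ^+ 2))) + ((288%:R * (z * (s ^+ 2 * k))) + ((192%:R * (z * s ^+ 3)) + ((400%:R * (z ^+ 2 * (s * k))) + ((400%:R * (z ^+ 2 * s ^+ 2)) + (384%:R * (z ^+ 3 * s)))))))))))))))))); [rewrite /d6; ring | posi].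
- apply: (@pos_eq _ _ (((16%:R * (z ^+ 2 * k ^+ 2)) + ((64%:R * (z ^+ 3 * k)) + ((48%:R * z ^+ 4) + ((16%:R * (z * (s * k ^+ 2))) + ((48%:R * (z * (s ^+ 2 * k))) + ((32%:R * (z * s ^+ 3)) + ((112%:R * (z ^+ 2 * (s * k))) + ((112%:R * (z ^+ 2 * s ^+ 2)) + (128%:R * (z ^+ 3 * s)))))))))))); [rewrite /d4; ring | posi].
- apply: (@pos_eq _ _ (((128%:R * (z ^+ 4 * k ^+ 6)) + (((1%:R * 1000%:R + 536%:R) * (z ^+ 5 * k ^+ 5)) + (((7%:R * 1000%:R + 104%:R) * (z ^+ 6 * k ^+ 4)) + (((15%:R * 1000%:R + 872%:R) * (z ^+ 7 * k ^+ 3)) + (((16%:R * 1000%:R + 896%:R) * (z ^+ 8 * k ^+ 2)) + (((6%:R * 1000%:R + 144%:R) * (z ^+ 9 * k)) + ((16%:R * (s ^+ 2 * k ^+ 8)) + ((192%:R * (s ^+ 3 * k ^+ 7)) + (((1%:R * 1000%:R + 24%:R) * (s ^+ 4 * k ^+ 6)) + (((3%:R * 1000%:R + 168%:R) * (s ^+ 5 * k ^+ 5)) + (((6%:R * 1000%:R + 208%:R) * (s ^+ 6 * k ^+ 4)) + (((7%:R * 1000%:R + 872%:R) * (s ^+ 7 * k ^+ 3)) + (((6%:R * 1000%:R + 288%:R) * (s ^+ 8 * k ^+ 2)) + (((2%:R * 1000%:R + 880%:R) * (s ^+ 9 * k)) + ((576%:R * s ^+ 10) + ((256%:R * (z * (s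 ^+ 2 * k ^+ 7))) + (((2%:R * 1000%:R + 800%:R) * (z * (s ^+ 3 * k ^+ 6))) + (((13%:R * 1000%:R + 296%:R) * (z * (s ^+ 4 * k ^+ 5))) + (((35%:R * 1000%:R + 376%:R) * (z * (s ^+ 5 * k ^+ 4))) + (((56%:R * 1000%:R + 720%:R) * (z * (s ^+ 6 * k ^+ 3))) + (((54%:R * 1000%:R + 560%:R) * (z * (s ^+ 7 * k ^+ 2))) + (((28%:R * 1000%:R + 992%:R) * (z * (s ^+ 8 * k))) + (((6%:R * 1000%:R + 528%:R) * (z * s ^+ 9)) + (((2%:R * 1000%:R + 32%:R) * (z ^+ 2 * (s ^+ 2 * k ^+ 6))) + (((19%:R * 1000%:R + 632%:R) * (z ^+ 2 * (s ^+ 3 * k ^+ 5))) + (((79%:R * 1000%:R + 72%:R) * (z ^+ 2 * (s ^+ 4 * k ^+ 4))) + (((169%:R * 1000%:R + 200%:R) * (z ^+ 2 * (s ^+ 5 * k ^+ 3))) + (((201%:R * 1000%:R + 936%:R) * (z ^+ 2 * (s ^+ 6 * k ^+ 2))) + (((126%:R * 1000%:R + 656%:R) * (z ^+ 2 * (s ^+ 7 * k))) + (((32%:R * 1000%:R + 448%:R) * (z ^+ 2 * s ^+ 8)) + ((256%:R * (z ^+ 3 * (s * k ^+ 6))) + (((12%:R * 1000%:R + 352%:R) * (z ^+ 3 * (s ^+ 2 * k ^+ 5))) + (((89%:R * 1000%:R + 216%:R) * (z ^+ 3 * (s ^+ 3 * k ^+ 4))) + (((272%:R * 1000%:R + 832%:R)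 * (z ^+ 3 * (s ^+ 4 * k ^+ 3))) + (((418%:R * 1000%:R + 176%:R) * (z ^+ 3 * (s ^+ 5 * k ^+ 2))) + (((315%:R * 1000%:R + 392%:R) * (z ^+ 3 * (s ^+ 6 * k))) + (((92%:R * 1000%:R + 928%:R) * (z ^+ 3 * s ^+ 7)) + (((4%:R * 1000%:R + 224%:R) * (z ^+ 4 * (s * k ^+ 5))) + (((57%:R * 1000%:R + 488%:R) * (z ^+ 4 * (s ^+ 2 * k ^+ 4))) + (((264%:R * 1000%:R + 416%:R) * (z ^+ 4 * (s ^+ 3 * k ^+ 3))) + (((536%:R * 1000%:R + 464%:R) * (z ^+ 4 * (s ^+ 4 * k ^+ 2))) + (((494%:R * 1000%:R + 592%:R) * (z ^+ 4 * (s ^+ 5 * k))) + (((169%:R * 1000%:R + 152%:R) * (z ^+ 4 * s ^+ 6)) + (((25%:R * 1000%:R + 152%:R) * (z ^+ 5 * (s * k ^+ 4))) + (((165%:R * 1000%:R + 888%:R) * (z ^+ 5 * (s ^+ 2 * k ^+ 3))) + (((448%:R * 1000%:R + 896%:R) * (z ^+ 5 * (s ^+ 3 * k ^+ 2))) + (((509%:R * 1000%:R + 760%:R) * (z ^+ 5 * (s ^+ 4 * k))) + (((203%:R * 1000%:R + 136%:R) * (z ^+ 5 * s ^+ 5)) + (((69%:R * 1000%:R + 760%:R) * (z ^+ 6 * (s * k ^+ 3))) + (((251%:R * 1000%:R + 456%:R) * (z ^+ 6 * (s ^+ 2 * k ^+ 2))) + (((350%:R * 1000%:R + 80%:R) *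 (z ^+ 6 * (s ^+ 3 * k))) + (((161%:R * 1000%:R + 88%:R) * (z ^+ 6 * s ^+ 4)) + (((91%:R * 1000%:R + 392%:R) * (z ^+ 7 * (s * k ^+ 2))) + (((158%:R * 1000%:R + 464%:R) * (z ^+ 7 * (s ^+ 2 * k))) + (((81%:R * 1000%:R + 408%:R) * (z ^+ 7 * s ^+ 3)) + (((44%:R * 1000%:R + 544%:R) * (z ^+ 8 * (s * k))) + (((23%:R * 1000%:R + 808%:R) * (z ^+ 8 * s ^+ 2)) + ((3%:R * 1000%:R + 72%:R) * (z ^+ 9 * s))))))))))))))))))))))))))))))))))))))))))))))))))))))))))))); [rewrite /n6 /d6 /n4 /d4; ring | posi].
Qed.

Lemma pr_4_19 (R : rcfType) (a b c z s k : R) : a = 2%:R * z + s -> b = 2%:R * z + s + k -> c = 2%:R * z + 2%:R * s + k -> 0 < z -> 0 <= s -> 0 < k -> 0 < (2%:R * z ^+ 2 - s ^+ 2 - s * k) ->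
  n4 a b c / d4 a b c < n19 a b c / d19 a b c.
Proof.
move=> ea eb ec hz hs hk hm; subst a b c.
apply: frac_lt.
- apply: (@pos_eq _ _ (((16%:R * (z ^+ 2 * k ^+ 2)) + ((64%:R * (z ^+ 3 * k)) + ((48%:R * z ^+ 4) + ((16%:R * (z * (s * k ^+ 2))) + ((48%:R * (z * (s ^+ 2 * k))) + ((32%:R * (z * s ^+ 3)) + ((112%:R * (z ^+ 2 * (s * k))) + ((112%:R * (z ^+ 2 * s ^+ 2)) + (128%:R * (z ^+ 3 * s)))))))))))); [rewrite /d4; ring | posi].
- apply: (@pos_eq _ _ (((256%:R * (z ^+ 4 * k ^+ 6)) + (((3%:R * 1000%:R + 72%:R) * (z ^+ 5 * k ^+ 5)) + (((14%:R * 1000%:R + 336%:R) * (z ^+ 6 * k ^+ 4)) + (((33%:R * 1000%:R + 792%:R) * (z ^+ 7 * k ^+ 3)) + (((44%:R * 1000%:R + 32%:R) * (z ^+ 8 * k ^+ 2)) + (((30%:R * 1000%:R + 720%:R) * (z ^+ 9 * k)) + (((9%:R * 1000%:R + 216%:R) * z ^+ 10) + ((64%:R * (s ^+ 4 * k ^+ 6)) + ((512%:R * (s ^+ 5 * k ^+ 5)) + (((1%:R * 1000%:R + 664%:R) * (s ^+ 6 * k ^+ 4)) + (((2%:R * 1000%:R + 816%:R) * (s ^+ 7 * k ^+ 3)) + (((2%:R * 1000%:R + 624%:R) * (s ^+ 8 * k ^+ 2)) + (((1%:R * 1000%:R + 280%:R) * (s ^+ 9 * k)) + ((256%:R * s ^+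 10) + ((256%:R * (z * (s ^+ 3 * k ^+ 6))) + (((2%:R * 1000%:R + 816%:R) * (z * (s ^+ 4 * k ^+ 5))) + (((11%:R * 1000%:R + 520%:R) * (z * (s ^+ 5 * k ^+ 4))) + (((23%:R * 1000%:R + 296%:R) * (z * (s ^+ 6 * k ^+ 3))) + (((25%:R * 1000%:R + 88%:R) * (z * (s ^+ 7 * k ^+ 2))) + (((13%:R * 1000%:R + 824%:R) * (z * (s ^+ 8 * k))) + (((3%:R * 1000%:R + 72%:R) * (z * s ^+ 9)) + ((512%:R * (z ^+ 2 * (s ^+ 2 * k ^+ 6))) + (((7%:R * 1000%:R + 296%:R) * (z ^+ 2 * (s ^+ 3 * k ^+ 5))) + (((37%:R * 1000%:R + 248%:R) * (z ^+ 2 * (s ^+ 4 * k ^+ 4))) + (((90%:R * 1000%:R + 496%:R) * (z ^+ 2 * (s ^+ 5 * k ^+ 3))) + (((113%:R * 1000%:R + 792%:R) * (z ^+ 2 * (s ^+ 6 * k ^+ 2))) + (((71%:R * 1000%:R + 680%:R) * (z ^+ 2 * (s ^+ 7 * k))) + (((17%:R * 1000%:R + 920%:R) * (z ^+ 2 * s ^+ 8)) + ((512%:R * (z ^+ 3 * (s * k ^+ 6))) + (((10%:R * 1000%:R + 496%:R) * (z ^+ 3 * (s ^+ 2 * k ^+ 5))) + (((69%:R * 1000%:R + 632%:R) * (z ^+ 3 * (s ^+ 3 * k ^+ 4))) + (((208%:R * 1000%:R + 640%:R) * (z ^+ 3 * (s ^+ 4 * k ^+ 3))) + (((312%:R * 1000%:R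 + 832%:R) * (z ^+ 3 * (s ^+ 5 * k ^+ 2))) + (((229%:R * 1000%:R + 376%:R) * (z ^+ 3 * (s ^+ 6 * k))) + (((65%:R * 1000%:R + 536%:R) * (z ^+ 3 * s ^+ 7)) + (((8%:R * 1000%:R + 448%:R) * (z ^+ 4 * (s * k ^+ 5))) + (((78%:R * 1000%:R + 656%:R) * (z ^+ 4 * (s ^+ 2 * k ^+ 4))) + (((304%:R * 1000%:R + 512%:R) * (z ^+ 4 * (s ^+ 3 * k ^+ 3))) + (((562%:R * 1000%:R + 496%:R) * (z ^+ 4 * (s ^+ 4 * k ^+ 2))) + (((492%:R * 1000%:R + 288%:R) * (z ^+ 4 * (s ^+ 5 * k))) + (((164%:R * 1000%:R + 96%:R) * (z ^+ 4 * s ^+ 6)) + (((50%:R * 1000%:R + 688%:R) * (z ^+ 5 * (s * k ^+ 4))) + (((279%:R * 1000%:R + 40%:R) * (z ^+ 5 * (s ^+ 2 * k ^+ 3))) + (((670%:R * 1000%:R + 720%:R) * (z ^+ 5 * (s ^+ 3 * k ^+ 2))) + (((727%:R * 1000%:R + 40%:R) * (z ^+ 5 * (s ^+ 4 * k))) + (((290%:R * 1000%:R + 816%:R) * (z ^+ 5 * s ^+ 5)) + (((146%:R * 1000%:R + 944%:R) * (z ^+ 6 * (s * k ^+ 3))) + (((512%:R * 1000%:R + 512%:R) * (z ^+ 6 * (s ^+ 2 * k ^+ 2))) + (((731%:R * 1000%:R + 136%:R) * (z ^+ 6 * (s ^+ 3 * k))) + (((365%:R * 1000%:R + 568%:R)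 * (z ^+ 6 * s ^+ 4)) + (((226%:R * 1000%:R + 816%:R) * (z ^+ 7 * (s * k ^+ 2))) + (((477%:R * 1000%:R + 696%:R) * (z ^+ 7 * (s ^+ 2 * k))) + (((318%:R * 1000%:R + 464%:R) * (z ^+ 7 * s ^+ 3)) + (((182%:R * 1000%:R + 272%:R) * (z ^+ 8 * (s * k))) + (((182%:R * 1000%:R + 272%:R) * (z ^+ 8 * s ^+ 2)) + ((61%:R * 1000%:R + 440%:R) * (z ^+ 9 * s))))))))))))))))))))))))))))))))))))))))))))))))))))))))))); [rewrite /d19; ring | posi].
- apply: (@pos_eq _ _ ((((2%:R * k ^+ 2) + ((8%:R * (z * k)) + ((4%:R * z ^+ 2) + ((6%:R * (s * k)) + ((4%:R * s ^+ 2) + (8%:R * (z * s))))))) * (((2%:R * k ^+ 2) + ((8%:R * (z * k)) + ((4%:R * z ^+ 2) + ((6%:R * (s * k)) + ((4%:R * s ^+ 2) + (8%:R * (z * s))))))) * (((4%:R * z ^+ 2) + ((2%:R * (s * k)) + ((4%:R * s ^+ 2) + (8%:R * (z * s))))) * ((2%:R * (2%:R * z ^+ 2 - s ^+ 2 - s * k)) * ((128%:R * (z ^+ 4 * k ^+ 4)) + ((768%:R * (z ^+ 5 * k ^+ 3)) + (((1%:R * 1000%:R + 344%:R) * (z ^+ 6 * k ^+ 2)) + ((768%:R * (z ^+ 7 * k)) + ((16%:R * (s ^+ 4 * k ^+ 4)) + ((80%:R * (s ^+ 5 * k ^+ 3)) + ((144%:R * (s ^+ 6 * k ^+ 2)) +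 ((112%:R * (s ^+ 7 * k)) + ((32%:R * s ^+ 8) + ((112%:R * (z * (s ^+ 3 * k ^+ 4))) + ((672%:R * (z * (s ^+ 4 * k ^+ 3))) + (((1%:R * 1000%:R + 392%:R) * (z * (s ^+ 5 * k ^+ 2))) + (((1%:R * 1000%:R + 216%:R) * (z * (s ^+ 6 * k))) + ((384%:R * (z * s ^+ 7)) + ((240%:R * (z ^+ 2 * (s ^+ 2 * k ^+ 4))) + (((1%:R * 1000%:R + 920%:R) * (z ^+ 2 * (s ^+ 3 * k ^+ 3))) + (((4%:R * 1000%:R + 864%:R) * (z ^+ 2 * (s ^+ 4 * k ^+ 2))) + (((4%:R * 1000%:R + 976%:R) * (z ^+ 2 * (s ^+ 5 * k))) + (((1%:R * 1000%:R + 792%:R) * (z ^+ 2 * s ^+ 6)) + ((256%:R * (z ^+ 3 * (s * k ^+ 4))) + (((2%:R * 1000%:R + 752%:R) * (z ^+ 3 * (s ^+ 2 * k ^+ 3))) + (((8%:R * 1000%:R + 672%:R) * (z ^+ 3 * (s ^+ 3 * k ^+ 2))) + (((10%:R * 1000%:R + 528%:R) * (z ^+ 3 * (s ^+ 4 * k))) + (((4%:R * 1000%:R + 352%:R) * (z ^+ 3 * s ^+ 5)) + (((2%:R * 1000%:R + 176%:R) * (z ^+ 4 * (s * k ^+ 3))) + (((8%:R * 1000%:R + 896%:R) * (z ^+ 4 * (s ^+ 2 * k ^+ 2))) + (((12%:R * 1000%:R + 928%:R) * (z ^+ 4 * (s ^+ 3 * k))) + (((6%:R * 1000%:R + 48%:R)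 * (z ^+ 4 * s ^+ 4)) + (((5%:R * 1000%:R + 184%:R) * (z ^+ 5 * (s * k ^+ 2))) + (((9%:R * 1000%:R + 536%:R) * (z ^+ 5 * (s ^+ 2 * k))) + (((4%:R * 1000%:R + 864%:R) * (z ^+ 5 * s ^+ 3)) + (((4%:R * 1000%:R + 32%:R) * (z ^+ 6 * (s * k))) + (((2%:R * 1000%:R + 112%:R) * (z ^+ 6 * s ^+ 2)) + (384%:R * (z ^+ 7 * s))))))))))))))))))))))))))))))))))))))))); [rewrite /n4 /d4 /n19 /d19; ring | posi].
Qed.

Lemma pr_19_aux (R : rcfType) (a b c z s k : R) : a = 2%:R * z + s -> b = 2%:R * z + s + k -> c = 2%:R * z + 2%:R * s + k -> 0 < z -> 0 <= s -> 0 < k -> 0 < (2%:R * z ^+ 2 - s ^+ 2 - s * k) ->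
  n19 a b c / d19 a b c < naux a b c / daux a b c.
Proof.
move=> ea eb ec hz hs hk hm; subst a b c.
apply: frac_lt.
- apply: (@pos_eq _ _ (((256%:R * (z ^+ 4 * k ^+ 6)) + (((3%:R * 1000%:R + 72%:R) * (z ^+ 5 * k ^+ 5)) + (((14%:R * 1000%:R + 336%:R) * (z ^+ 6 * k ^+ 4)) + (((33%:R * 1000%:R + 792%:R) * (z ^+ 7 * k ^+ 3)) + (((44%:R * 1000%:R + 32%:R) * (z ^+ 8 * k ^+ 2)) + (((30%:R * 1000%:R + 720%:R) * (z ^+ 9 * k)) + (((9%:R * 1000%:R + 216%:R) * z ^+ 10) + ((64%:R * (s ^+ 4 * k ^+ 6)) + ((512%:R * (s ^+ 5 * k ^+ 5)) + (((1%:R * 1000%:R + 664%:R) * (s ^+ 6 * k ^+ 4)) + (((2%:R * 1000%:R + 816%:R) * (s ^+ 7 * k ^+ 3)) + (((2%:R * 1000%:R + 624%:R) * (s ^+ 8 * k ^+ 2)) + (((1%:R * 1000%:R + 280%:R) * (s ^+ 9 * k)) + ((256%:R * s ^+ 10) + ((256%:R * (z * (s ^+ 3 * k ^+ 6))) + (((2%:R * 1000%:R + 816%:R) * (z * (s ^+ 4 * k ^+ 5))) + (((11%:R * 1000%:R + 520%:R) * (z * (s ^+ 5 * k ^+ 4))) + (((23%:R * 1000%:R + 296%:R) * (z * (s ^+ 6 * k ^+ 3))) + (((25%:R * 1000%:R + 88%:R) * (z * (s ^+ 7 * k ^+ 2))) + (((13%:R * 1000%:R + 824%:R) * (z * (s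 ^+ 8 * k))) + (((3%:R * 1000%:R + 72%:R) * (z * s ^+ 9)) + ((512%:R * (z ^+ 2 * (s ^+ 2 * k ^+ 6))) + (((7%:R * 1000%:R + 296%:R) * (z ^+ 2 * (s ^+ 3 * k ^+ 5))) + (((37%:R * 1000%:R + 248%:R) * (z ^+ 2 * (s ^+ 4 * k ^+ 4))) + (((90%:R * 1000%:R + 496%:R) * (z ^+ 2 * (s ^+ 5 * k ^+ 3))) + (((113%:R * 1000%:R + 792%:R) * (z ^+ 2 * (s ^+ 6 * k ^+ 2))) + (((71%:R * 1000%:R + 680%:R) * (z ^+ 2 * (s ^+ 7 * k))) + (((17%:R * 1000%:R + 920%:R) * (z ^+ 2 * s ^+ 8)) + ((512%:R * (z ^+ 3 * (s * k ^+ 6))) + (((10%:R * 1000%:R + 496%:R) * (z ^+ 3 * (s ^+ 2 * k ^+ 5))) + (((69%:R * 1000%:R + 632%:R) * (z ^+ 3 * (s ^+ 3 * k ^+ 4))) + (((208%:R * 1000%:R + 640%:R) * (z ^+ 3 * (s ^+ 4 * k ^+ 3))) + (((312%:R * 1000%:R + 832%:R) * (z ^+ 3 * (s ^+ 5 * k ^+ 2))) + (((229%:R * 1000%:R + 376%:R) * (z ^+ 3 * (s ^+ 6 * k))) + (((65%:R * 1000%:R + 536%:R) * (z ^+ 3 * s ^+ 7)) + (((8%:R * 1000%:R + 448%:R) * (z ^+ 4 * (s * k ^+ 5))) + (((78%:R * 1000%:R + 656%:R) * (z ^+ 4 * (s ^+ 2 * k ^+ 4))) + (((304%:R * 1000%:R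 + 512%:R) * (z ^+ 4 * (s ^+ 3 * k ^+ 3))) + (((562%:R * 1000%:R + 496%:R) * (z ^+ 4 * (s ^+ 4 * k ^+ 2))) + (((492%:R * 1000%:R + 288%:R) * (z ^+ 4 * (s ^+ 5 * k))) + (((164%:R * 1000%:R + 96%:R) * (z ^+ 4 * s ^+ 6)) + (((50%:R * 1000%:R + 688%:R) * (z ^+ 5 * (s * k ^+ 4))) + (((279%:R * 1000%:R + 40%:R) * (z ^+ 5 * (s ^+ 2 * k ^+ 3))) + (((670%:R * 1000%:R + 720%:R) * (z ^+ 5 * (s ^+ 3 * k ^+ 2))) + (((727%:R * 1000%:R + 40%:R) * (z ^+ 5 * (s ^+ 4 * k))) + (((290%:R * 1000%:R + 816%:R) * (z ^+ 5 * s ^+ 5)) + (((146%:R * 1000%:R + 944%:R) * (z ^+ 6 * (s * k ^+ 3))) + (((512%:R * 1000%:R + 512%:R) * (z ^+ 6 * (s ^+ 2 * k ^+ 2))) + (((731%:R * 1000%:R + 136%:R) * (z ^+ 6 * (s ^+ 3 * k))) + (((365%:R * 1000%:R + 568%:R) * (z ^+ 6 * s ^+ 4)) + (((226%:R * 1000%:R + 816%:R) * (z ^+ 7 * (s * k ^+ 2))) + (((477%:R * 1000%:R + 696%:R) * (z ^+ 7 * (s ^+ 2 * k))) + (((318%:R * 1000%:R + 464%:R) * (z ^+ 7 * s ^+ 3)) + (((182%:R * 1000%:R + 272%:R) * (z ^+ 8 * (s * k))) + (((182%:R * 1000%:R + 272%:R) * (z ^+ 8 * s ^+ 2)) + ((61%:R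 * 1000%:R + 440%:R) * (z ^+ 9 * s))))))))))))))))))))))))))))))))))))))))))))))))))))))))))); [rewrite /d19; ring | posi].
- apply: (@pos_eq _ _ (((2%:R * k ^+ 4) + ((24%:R * (z * k ^+ 3)) + ((52%:R * (z ^+ 2 * k ^+ 2)) + ((16%:R * (s * k ^+ 3)) + ((46%:R * (s ^+ 2 * k ^+ 2)) + ((60%:R * (s ^+ 3 * k)) + ((30%:R * s ^+ 4) + ((88%:R * (z * (s * k ^+ 2))) + ((120%:R * (z * (s ^+ 2 * k))) + ((80%:R * (z * s ^+ 3)) + ((52%:R * (z ^+ 2 * (s * k))) + (52%:R * (z ^+ 2 * s ^+ 2))))))))))))))); [rewrite /daux; ring | posi].
- apply: (@pos_eq _ _ (((k + ((2%:R * z) + s)) * ((k + ((2%:R * z) + (2%:R * s))) * (((11%:R * 1000%:R + 776%:R) * (z ^+ 6 * k ^+ 8)) + (((188%:R * 1000%:R + 416%:R) * (z ^+ 7 * k ^+ 7)) + ((((1%:R * 1000%:R + 256%:R) * 1000%:R + 448%:R) * (z ^+ 8 * k ^+ 6)) + ((((4%:R * 1000%:R + 534%:R) * 1000%:R + 272%:R) * (z ^+ 9 * k ^+ 5)) + ((((9%:R * 1000%:R + 662%:R) * 1000%:R + 464%:R) * (z ^+ 10 * k ^+ 4)) + ((((12%:R * 1000%:R + 533%:R) * 1000%:R + 760%:R) * (z ^+ 11 * k ^+ 3)) + ((((9%:R * 1000%:R + 867%:R) * 1000%:R + 264%:R) * (z ^+ 12 * k ^+ 2)) + ((((4%:R *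 1000%:R + 423%:R) * 1000%:R + 680%:R) * (z ^+ 13 * k)) + (((884%:R * 1000%:R + 736%:R) * z ^+ 14) + ((96%:R * (s ^+ 4 * k ^+ 10)) + (((1%:R * 1000%:R + 504%:R) * (s ^+ 5 * k ^+ 9)) + (((10%:R * 1000%:R + 240%:R) * (s ^+ 6 * k ^+ 8)) + (((39%:R * 1000%:R + 936%:R) * (s ^+ 7 * k ^+ 7)) + (((98%:R * 1000%:R + 752%:R) * (s ^+ 8 * k ^+ 6)) + (((161%:R * 1000%:R + 472%:R) * (s ^+ 9 * k ^+ 5)) + (((176%:R * 1000%:R + 160%:R) * (s ^+ 10 * k ^+ 4)) + (((125%:R * 1000%:R + 792%:R) * (s ^+ 11 * k ^+ 3)) + (((55%:R * 1000%:R + 616%:R) * (s ^+ 12 * k ^+ 2)) + (((13%:R * 1000%:R + 440%:R) * (s ^+ 13 * k)) + (((1%:R * 1000%:R + 280%:R) * s ^+ 14) + ((128%:R * (z * (s ^+ 3 * k ^+ 10))) + (((3%:R * 1000%:R + 968%:R) * (z * (s ^+ 4 * k ^+ 9))) + (((40%:R * 1000%:R + 256%:R) * (z * (s ^+ 5 * k ^+ 8))) + (((207%:R * 1000%:R + 360%:R) * (z * (s ^+ 6 * k ^+ 7))) + (((631%:R * 1000%:R + 936%:R) * (z * (s ^+ 7 * k ^+ 6))) + ((((1%:R * 1000%:R + 214%:R) * 1000%:R + 720%:R) * (z * (s ^+ 8 * k ^+ 5))) + ((((1%:R * 1000%:R + 500%:R) * 1000%:R + 800%:R) * (z * (s ^+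 9 * k ^+ 4))) + ((((1%:R * 1000%:R + 171%:R) * 1000%:R + 968%:R) * (z * (s ^+ 10 * k ^+ 3))) + (((543%:R * 1000%:R + 680%:R) * (z * (s ^+ 11 * k ^+ 2))) + (((128%:R * 1000%:R + 768%:R) * (z * (s ^+ 12 * k))) + (((9%:R * 1000%:R + 984%:R) * (z * s ^+ 13)) + ((128%:R * (z ^+ 2 * (s ^+ 2 * k ^+ 10))) + (((4%:R * 1000%:R + 480%:R) * (z ^+ 2 * (s ^+ 3 * k ^+ 9))) + (((71%:R * 1000%:R + 360%:R) * (z ^+ 2 * (s ^+ 4 * k ^+ 8))) + (((527%:R * 1000%:R + 232%:R) * (z ^+ 2 * (s ^+ 5 * k ^+ 7))) + ((((2%:R * 1000%:R + 126%:R) * 1000%:R + 912%:R) * (z ^+ 2 * (s ^+ 6 * k ^+ 6))) + ((((5%:R * 1000%:R + 131%:R) * 1000%:R + 456%:R) * (z ^+ 2 * (s ^+ 7 * k ^+ 5))) + ((((7%:R * 1000%:R + 688%:R) * 1000%:R + 448%:R) * (z ^+ 2 * (s ^+ 8 * k ^+ 4))) + ((((7%:R * 1000%:R + 135%:R) * 1000%:R + 296%:R) * (z ^+ 2 * (s ^+ 9 * k ^+ 3))) + ((((3%:R * 1000%:R + 913%:R) * 1000%:R + 344%:R) * (z ^+ 2 * (s ^+ 10 * k ^+ 2))) + ((((1%:R * 1000%:R + 120%:R) * 1000%:R + 0%:R) * (z ^+ 2 * (s ^+ 11 * k))) + (((118%:R * 1000%:R + 272%:R) * (z ^+ 2 *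 s ^+ 12)) + (((2%:R * 1000%:R + 560%:R) * (z ^+ 3 * (s ^+ 2 * k ^+ 9))) + (((80%:R * 1000%:R + 896%:R) * (z ^+ 3 * (s ^+ 3 * k ^+ 8))) + (((935%:R * 1000%:R + 680%:R) * (z ^+ 3 * (s ^+ 4 * k ^+ 7))) + ((((5%:R * 1000%:R + 234%:R) * 1000%:R + 560%:R) * (z ^+ 3 * (s ^+ 5 * k ^+ 6))) + ((((16%:R * 1000%:R + 368%:R) * 1000%:R + 0%:R) * (z ^+ 3 * (s ^+ 6 * k ^+ 5))) + ((((30%:R * 1000%:R + 583%:R) * 1000%:R + 296%:R) * (z ^+ 3 * (s ^+ 7 * k ^+ 4))) + ((((34%:R * 1000%:R + 741%:R) * 1000%:R + 888%:R) * (z ^+ 3 * (s ^+ 8 * k ^+ 3))) + ((((23%:R * 1000%:R + 337%:R) * 1000%:R + 600%:R) * (z ^+ 3 * (s ^+ 9 * k ^+ 2))) + ((((8%:R * 1000%:R + 424%:R) * 1000%:R + 192%:R) * (z ^+ 3 * (s ^+ 10 * k))) + ((((1%:R * 1000%:R + 235%:R) * 1000%:R + 968%:R) * (z ^+ 3 * s ^+ 11)) + (((64%:R * 1000%:R + 128%:R) * (z ^+ 4 * (s ^+ 2 * k ^+ 8))) + ((((1%:R * 1000%:R + 258%:R) * 1000%:R + 752%:R) * (z ^+ 4 * (s ^+ 3 * k ^+ 7))) + ((((9%:R * 1000%:R + 771%:R) * 1000%:R + 520%:R) * (z ^+ 4 * (s ^+ 4 * k ^+ 6))) + ((((39%:R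 * 1000%:R + 233%:R) * 1000%:R + 24%:R) * (z ^+ 4 * (s ^+ 5 * k ^+ 5))) + ((((90%:R * 1000%:R + 261%:R) * 1000%:R + 632%:R) * (z ^+ 4 * (s ^+ 6 * k ^+ 4))) + ((((123%:R * 1000%:R + 282%:R) * 1000%:R + 944%:R) * (z ^+ 4 * (s ^+ 7 * k ^+ 3))) + ((((98%:R * 1000%:R + 520%:R) * 1000%:R + 704%:R) * (z ^+ 4 * (s ^+ 8 * k ^+ 2))) + ((((42%:R * 1000%:R + 400%:R) * 1000%:R + 640%:R) * (z ^+ 4 * (s ^+ 9 * k))) + ((((7%:R * 1000%:R + 557%:R) * 1000%:R + 376%:R) * (z ^+ 4 * s ^+ 10)) + (((35%:R * 1000%:R + 328%:R) * (z ^+ 5 * (s * k ^+ 8))) + ((((1%:R * 1000%:R + 201%:R) * 1000%:R + 664%:R) * (z ^+ 5 * (s ^+ 2 * k ^+ 7))) + ((((12%:R * 1000%:R + 954%:R) * 1000%:R + 880%:R) * (z ^+ 5 * (s ^+ 3 * k ^+ 6))) + ((((66%:R * 1000%:R + 567%:R) * 1000%:R + 424%:R) * (z ^+ 5 * (s ^+ 4 * k ^+ 5))) + ((((187%:R * 1000%:R + 410%:R) * 1000%:R + 176%:R) * (z ^+ 5 * (s ^+ 5 * k ^+ 4))) + ((((304%:R * 1000%:R + 612%:R) * 1000%:R + 608%:R) * (z ^+ 5 * (s ^+ 6 * k ^+ 3))) + ((((284%:R * 1000%:R + 742%:R) * 1000%:R + 144%:R) * (z ^+ 5 * (s ^+ 7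 * k ^+ 2))) + ((((142%:R * 1000%:R + 40%:R) * 1000%:R + 64%:R) * (z ^+ 5 * (s ^+ 8 * k))) + ((((29%:R * 1000%:R + 280%:R) * 1000%:R + 0%:R) * (z ^+ 5 * s ^+ 9)) + (((706%:R * 1000%:R + 560%:R) * (z ^+ 6 * (s * k ^+ 7))) + ((((11%:R * 1000%:R + 252%:R) * 1000%:R + 736%:R) * (z ^+ 6 * (s ^+ 2 * k ^+ 6))) + ((((76%:R * 1000%:R + 508%:R) * 1000%:R + 160%:R) * (z ^+ 6 * (s ^+ 3 * k ^+ 5))) + ((((268%:R * 1000%:R + 390%:R) * 1000%:R + 656%:R) * (z ^+ 6 * (s ^+ 4 * k ^+ 4))) + ((((523%:R * 1000%:R + 873%:R) * 1000%:R + 280%:R) * (z ^+ 6 * (s ^+ 5 * k ^+ 3))) + ((((574%:R * 1000%:R + 252%:R) * 1000%:R + 32%:R) * (z ^+ 6 * (s ^+ 6 * k ^+ 2))) + ((((330%:R * 1000%:R + 793%:R) * 1000%:R + 216%:R) * (z ^+ 6 * (s ^+ 7 * k))) + ((((77%:R * 1000%:R + 990%:R) * 1000%:R + 912%:R) * (z ^+ 6 * s ^+ 8)) + ((((5%:R * 1000%:R + 685%:R) * 1000%:R + 248%:R) * (z ^+ 7 * (s * k ^+ 6))) + ((((56%:R * 1000%:R + 522%:R) * 1000%:R + 752%:R) * (z ^+ 7 * (s ^+ 2 * k ^+ 5))) + ((((260%:R * 1000%:R + 33%:R) * 1000%:R + 536%:R) * (z ^+ 7 * (s ^+ 3 * k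 ^+ 4))) + ((((627%:R * 1000%:R + 846%:R) * 1000%:R + 144%:R) * (z ^+ 7 * (s ^+ 4 * k ^+ 3))) + ((((821%:R * 1000%:R + 859%:R) * 1000%:R + 840%:R) * (z ^+ 7 * (s ^+ 5 * k ^+ 2))) + ((((552%:R * 1000%:R + 708%:R) * 1000%:R + 608%:R) * (z ^+ 7 * (s ^+ 6 * k))) + ((((149%:R * 1000%:R + 849%:R) * 1000%:R + 600%:R) * (z ^+ 7 * s ^+ 7)) + ((((24%:R * 1000%:R + 173%:R) * 1000%:R + 568%:R) * (z ^+ 8 * (s * k ^+ 5))) + ((((162%:R * 1000%:R + 996%:R) * 1000%:R + 224%:R) * (z ^+ 8 * (s ^+ 2 * k ^+ 4))) + ((((516%:R * 1000%:R + 47%:R) * 1000%:R + 872%:R) * (z ^+ 8 * (s ^+ 3 * k ^+ 3))) + ((((835%:R * 1000%:R + 664%:R) * 1000%:R + 896%:R) * (z ^+ 8 * (s ^+ 4 * k ^+ 2))) + ((((671%:R * 1000%:R + 516%:R) * 1000%:R + 672%:R) * (z ^+ 8 * (s ^+ 5 * k))) + ((((212%:R * 1000%:R + 705%:R) * 1000%:R + 280%:R) * (z ^+ 8 * s ^+ 6)) + ((((59%:R * 1000%:R + 648%:R) * 1000%:R + 0%:R) * (z ^+ 9 * (s * k ^+ 4))) + ((((277%:R * 1000%:R + 819%:R) * 1000%:R + 392%:R) * (z ^+ 9 * (s ^+ 2 * k ^+ 3))) + ((((592%:R * 1000%:R + 48%:R) * 1000%:R + 128%:R) * (z ^+ 9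 * (s ^+ 3 * k ^+ 2))) + ((((590%:R * 1000%:R + 780%:R) * 1000%:R + 416%:R) * (z ^+ 9 * (s ^+ 4 * k))) + ((((224%:R * 1000%:R + 428%:R) * 1000%:R + 32%:R) * (z ^+ 9 * s ^+ 5)) + ((((88%:R * 1000%:R + 260%:R) * 1000%:R + 608%:R) * (z ^+ 10 * (s * k ^+ 3))) + ((((278%:R * 1000%:R + 261%:R) * 1000%:R + 760%:R) * (z ^+ 10 * (s ^+ 2 * k ^+ 2))) + ((((367%:R * 1000%:R + 542%:R) * 1000%:R + 272%:R) * (z ^+ 10 * (s ^+ 3 * k))) + ((((174%:R * 1000%:R + 346%:R) * 1000%:R + 240%:R) * (z ^+ 10 * s ^+ 4)) + ((((78%:R * 1000%:R + 4%:R) * 1000%:R + 224%:R) * (z ^+ 11 * (s * k ^+ 2))) + ((((153%:R * 1000%:R + 501%:R) * 1000%:R + 696%:R) * (z ^+ 11 * (s ^+ 2 * k))) + ((((97%:R * 1000%:R + 26%:R) * 1000%:R + 48%:R) * (z ^+ 11 * s ^+ 3)) + ((((38%:R * 1000%:R + 621%:R) * 1000%:R + 184%:R) * (z ^+ 12 * (s * k))) + ((((36%:R * 1000%:R + 630%:R) * 1000%:R + 528%:R) * (z ^+ 12 * s ^+ 2)) + (((8%:R * 1000%:R + 404%:R) * 1000%:R + 992%:R) * (z ^+ 13 * s))))))))))))))))))))))))))))))))))))))))))))))))))))))))))))))))))))))))))))))))))))))))))))))))))))))))))))))); [rewrite /n19 /d19 /naux /daux; ring | posi].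
Qed.

Definition eYhh {R : rcfType} (a b c : R) : R := 3%:R * a ^+ 4 - 5%:R * a ^+ 2 * b ^+ 2 + 2%:R * a ^+ 2 * b * c - 5%:R * a ^+ 2 * c ^+ 2 + 2%:R * a * b ^+ 2 * c + 2%:R * a * b * c ^+ 2 + 3%:R * b ^+ 4 - 5%:R * b ^+ 2 * c ^+ 2 + 3%:R * c ^+ 4.
Lemma ex_Yhh (R : rcfType) (a b c z s k : R) : a = 2%:R * z + s -> b = 2%:R * z + s + k -> c = 2%:R * z + 2%:R * s + k -> 0 < z -> 0 <= s -> 0 < k -> 0 < (2%:R * z ^+ 2 - s ^+ 2 - s * k) ->
  0 < eYhh a b c.
Proof.
move=> ea eb ec hz hs hk hm; subst a b c.
apply: (@pos_eq _ _ ((k ^+ 4 + ((16%:R * (z * k ^+ 3)) + ((40%:R * (z ^+ 2 * k ^+ 2)) + ((10%:R * (s * k ^+ 3)) + ((35%:R * (s ^+ 2 * k ^+ 2)) + ((50%:R * (s ^+ 3 * k)) + ((25%:R * s ^+ 4) + ((64%:R * (z * (s * k ^+ 2))) + ((96%:R * (z * (s ^+ 2 * k))) + ((64%:R * (z * s ^+ 3)) + ((40%:R * (z ^+ 2 * (s * k))) + (40%:R * (z ^+ 2 * s ^+ 2))))))))))))))); [rewrite /eYhh; ring | posi].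
Qed.

Definition eWhh {R : rcfType} (a b c : R) : R := 4%:R * a ^+ 4 - 4%:R * a ^+ 2 * b ^+ 2 - 4%:R * a ^+ 2 * c ^+ 2 + 4%:R * b ^+ 4 - 4%:R * b ^+ 2 * c ^+ 2 + 4%:R * c ^+ 4.
Lemma ex_Whh (R : rcfType) (a b c z s k : R) : a = 2%:R * z + s -> b = 2%:R * z + s + k -> c = 2%:R * z + 2%:R * s + k -> 0 < z -> 0 <= s -> 0 < k -> 0 < (2%:R * z ^+ 2 - s ^+ 2 - s * k) ->
  0 < eWhh a b c.
Proof.
move=> ea eb ec hz hs hk hm; subst a b c.
apply: (@pos_eq _ _ (((4%:R * k ^+ 4) + ((32%:R * (z * k ^+ 3)) + ((64%:R * (z ^+ 2 * k ^+ 2)) + ((24%:R * (s * k ^+ 3)) + ((60%:R * (s ^+ 2 * k ^+ 2)) + ((72%:R * (s ^+ 3 * k)) + ((36%:R * s ^+ 4) + ((112%:R * (z * (s * k ^+ 2))) + ((144%:R * (z * (s ^+ 2 * k))) + ((96%:R * (z * s ^+ 3)) + ((64%:R * (z ^+ 2 * (s * k))) + (64%:R * (z ^+ 2 * s ^+ 2))))))))))))))); [rewrite /eWhh; ring | posi].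
Qed.

Lemma dpos_3 (R : rcfType) (a b c z s k : R) : a = 2%:R * z + s -> b = 2%:R * z + s + k -> c = 2%:R * z + 2%:R * s + k -> 0 < z -> 0 <= s -> 0 < k -> 0 < (2%:R * z ^+ 2 - s ^+ 2 - s * k) ->
  0 < d3 a b c.
Proof.
move=> ea eb ec hz hs hk hm; subst a b c.
apply: (@pos_eq _ _ (((16%:R * (z ^+ 2 * k ^+ 2)) + ((64%:R * (z ^+ 3 * k)) + ((48%:R * z ^+ 4) + ((16%:R * (z * (s * k ^+ 2))) + ((48%:R * (z * (s ^+ 2 * k))) + ((32%:R * (z * s ^+ 3)) + ((112%:R * (z ^+ 2 * (s * k))) + ((112%:R * (z ^+ 2 * s ^+ 2)) + (128%:R * (z ^+ 3 * s)))))))))))); [rewrite /d3; ring | posi].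
Qed.

Lemma dpos_9 (R : rcfType) (a b c z s k : R) : a = 2%:R * z + s -> b = 2%:R * z + s + k -> c = 2%:R * z + 2%:R * s + k -> 0 < z -> 0 <= s -> 0 < k -> 0 < (2%:R * z ^+ 2 - s ^+ 2 - s * k) ->
  0 < d9 a b c.
Proof.
move=> ea eb ec hz hs hk hm; subst a b c.
apply: (@pos_eq _ _ (((64%:R * (z ^+ 2 * k ^+ 2)) + ((192%:R * (z ^+ 3 * k)) + ((144%:R * z ^+ 4) + ((16%:R * (s ^+ 2 * k ^+ 2)) + ((32%:R * (s ^+ 3 * k)) + ((16%:R * s ^+ 4) + ((64%:R * (z * (s * k ^+ 2))) + ((192%:R * (z * (s ^+ 2 * k))) + ((128%:R * (z * s ^+ 3)) + ((352%:R * (z ^+ 2 * (s * k))) + ((352%:R * (z ^+ 2 * s ^+ 2)) + (384%:R * (z ^+ 3 * s))))))))))))))); [rewrite /d9; ring | posi].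
Qed.

Lemma dpos_10 (R : rcfType) (a b c z s k : R) : a = 2%:R * z + s -> b = 2%:R * z + s + k -> c = 2%:R * z + 2%:R * s + k -> 0 < z -> 0 <= s -> 0 < k -> 0 < (2%:R * z ^+ 2 - s ^+ 2 - s * k) ->
  0 < d10 a b c.
Proof.
move=> ea eb ec hz hs hk hm; subst a b c.
apply: (@pos_eq _ _ (((8%:R * k) + ((24%:R * z) + (16%:R * s))))); [rewrite /d10; ring | posi].
Qed.

Lemma dpos_2 (R : rcfType) (a b c z s k : R) : a = 2%:R * z + s -> b = 2%:R * z + s + k -> c = 2%:R * z + 2%:R * s + k -> 0 < z -> 0 <= s -> 0 < k -> 0 < (2%:R * z ^+ 2 - s ^+ 2 - s * k) ->
  0 < d2 a b c.
Proof.
move=> ea eb ec hz hs hk hm; subst a b c.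
apply: (@pos_eq _ _ (9%:R)); [rewrite /d2; ring | posi].
Qed.

Lemma dpos_1 (R : rcfType) (a b c z s k : R) : a = 2%:R * z + s -> b = 2%:R * z + s + k -> c = 2%:R * z + 2%:R * s + k -> 0 < z -> 0 <= s -> 0 < k -> 0 < (2%:R * z ^+ 2 - s ^+ 2 - s * k) ->
  0 < d1 a b c.
Proof.
move=> ea eb ec hz hs hk hm; subst a b c.
apply: (@pos_eq _ _ (((2%:R * k) + ((6%:R * z) + (4%:R * s))))); [rewrite /d1; ring | posi].
Qed.

Lemma dpos_6 (R : rcfType) (a b c z s k : R) : a = 2%:R * z + s -> b = 2%:R * z + s + k -> c = 2%:R * z + 2%:R * s + k -> 0 < z -> 0 <= s -> 0 < k -> 0 < (2%:R * z ^+ 2 - s ^+ 2 - s * k) ->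
  0 < d6 a b c.
Proof.
move=> ea eb ec hz hs hk hm; subst a b c.
apply: (@pos_eq _ _ (((4%:R * k ^+ 4) + ((32%:R * (z * k ^+ 3)) + ((112%:R * (z ^+ 2 * k ^+ 2)) + ((192%:R * (z ^+ 3 * k)) + ((144%:R * z ^+ 4) + ((24%:R * (s * k ^+ 3)) + ((60%:R * (s ^+ 2 * k ^+ 2)) + ((72%:R * (s ^+ 3 * k)) + ((36%:R * s ^+ 4) + ((160%:R * (z * (s * k ^+ 2))) + ((288%:R * (z * (s ^+ 2 * k))) + ((192%:R * (z * s ^+ 3)) + ((400%:R * (z ^+ 2 * (s * k))) + ((400%:R * (z ^+ 2 * s ^+ 2)) + (384%:R * (z ^+ 3 * s)))))))))))))))))); [rewrite /d6; ring | posi].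
Qed.

Lemma dpos_4 (R : rcfType) (a b c z s k : R) : a = 2%:R * z + s -> b = 2%:R * z + s + k -> c = 2%:R * z + 2%:R * s + k -> 0 < z -> 0 <= s -> 0 < k -> 0 < (2%:R * z ^+ 2 - s ^+ 2 - s * k) ->
  0 < d4 a b c.
Proof.
move=> ea eb ec hz hs hk hm; subst a b c.
apply: (@pos_eq _ _ (((16%:R * (z ^+ 2 * k ^+ 2)) + ((64%:R * (z ^+ 3 * k)) + ((48%:R * z ^+ 4) + ((16%:R * (z * (s * k ^+ 2))) + ((48%:R * (z * (s ^+ 2 * k))) + ((32%:R * (z * s ^+ 3)) + ((112%:R * (z ^+ 2 * (s * k))) + ((112%:R * (z ^+ 2 * s ^+ 2)) + (128%:R * (z ^+ 3 * s)))))))))))); [rewrite /d4; ring | posi].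
Qed.

Lemma dpos_19 (R : rcfType) (a b c z s k : R) : a = 2%:R * z + s -> b = 2%:R * z + s + k -> c = 2%:R * z + 2%:R * s + k -> 0 < z -> 0 <= s -> 0 < k -> 0 < (2%:R * z ^+ 2 - s ^+ 2 - s * k) ->
  0 < d19 a b c.
Proof.
move=> ea eb ec hz hs hk hm; subst a b c.
apply: (@pos_eq _ _ (((256%:R * (z ^+ 4 * k ^+ 6)) + (((3%:R * 1000%:R + 72%:R) * (z ^+ 5 * k ^+ 5)) + (((14%:R * 1000%:R + 336%:R) * (z ^+ 6 * k ^+ 4)) + (((33%:R * 1000%:R + 792%:R) * (z ^+ 7 * k ^+ 3)) + (((44%:R * 1000%:R + 32%:R) * (z ^+ 8 * k ^+ 2)) + (((30%:R * 1000%:R + 720%:R) * (z ^+ 9 * k)) + (((9%:R * 1000%:R + 216%:R) * z ^+ 10) + ((64%:R * (s ^+ 4 * k ^+ 6)) + ((512%:R * (s ^+ 5 * k ^+ 5)) + (((1%:R * 1000%:R + 664%:R) * (s ^+ 6 * k ^+ 4)) + (((2%:R * 1000%:R + 816%:R) * (s ^+ 7 * k ^+ 3)) + (((2%:R * 1000%:R + 624%:R) * (s ^+ 8 * k ^+ 2)) + (((1%:R * 1000%:R + 280%:R) * (s ^+ 9 * k)) + ((256%:R * s ^+ 10) + ((256%:R * (z * (s ^+ 3 * k ^+ 6))) + (((2%:R * 1000%:R + 816%:R) * (z * (s ^+ 4 * k ^+ 5))) + (((11%:R * 1000%:R + 520%:R) * (z * (s ^+ 5 * k ^+ 4))) + (((23%:R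 * 1000%:R + 296%:R) * (z * (s ^+ 6 * k ^+ 3))) + (((25%:R * 1000%:R + 88%:R) * (z * (s ^+ 7 * k ^+ 2))) + (((13%:R * 1000%:R + 824%:R) * (z * (s ^+ 8 * k))) + (((3%:R * 1000%:R + 72%:R) * (z * s ^+ 9)) + ((512%:R * (z ^+ 2 * (s ^+ 2 * k ^+ 6))) + (((7%:R * 1000%:R + 296%:R) * (z ^+ 2 * (s ^+ 3 * k ^+ 5))) + (((37%:R * 1000%:R + 248%:R) * (z ^+ 2 * (s ^+ 4 * k ^+ 4))) + (((90%:R * 1000%:R + 496%:R) * (z ^+ 2 * (s ^+ 5 * k ^+ 3))) + (((113%:R * 1000%:R + 792%:R) * (z ^+ 2 * (s ^+ 6 * k ^+ 2))) + (((71%:R * 1000%:R + 680%:R) * (z ^+ 2 * (s ^+ 7 * k))) + (((17%:R * 1000%:R + 920%:R) * (z ^+ 2 * s ^+ 8)) + ((512%:R * (z ^+ 3 * (s * k ^+ 6))) + (((10%:R * 1000%:R + 496%:R) * (z ^+ 3 * (s ^+ 2 * k ^+ 5))) + (((69%:R * 1000%:R + 632%:R) * (z ^+ 3 * (s ^+ 3 * k ^+ 4))) + (((208%:R * 1000%:R + 640%:R) * (z ^+ 3 * (s ^+ 4 * k ^+ 3))) + (((312%:R * 1000%:R + 832%:R) * (z ^+ 3 * (s ^+ 5 * k ^+ 2))) + (((229%:R * 1000%:R + 376%:R) * (z ^+ 3 * (s ^+ 6 * k))) + (((65%:R * 1000%:R + 536%:R) * (z ^+ 3 * s ^+ 7))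 + (((8%:R * 1000%:R + 448%:R) * (z ^+ 4 * (s * k ^+ 5))) + (((78%:R * 1000%:R + 656%:R) * (z ^+ 4 * (s ^+ 2 * k ^+ 4))) + (((304%:R * 1000%:R + 512%:R) * (z ^+ 4 * (s ^+ 3 * k ^+ 3))) + (((562%:R * 1000%:R + 496%:R) * (z ^+ 4 * (s ^+ 4 * k ^+ 2))) + (((492%:R * 1000%:R + 288%:R) * (z ^+ 4 * (s ^+ 5 * k))) + (((164%:R * 1000%:R + 96%:R) * (z ^+ 4 * s ^+ 6)) + (((50%:R * 1000%:R + 688%:R) * (z ^+ 5 * (s * k ^+ 4))) + (((279%:R * 1000%:R + 40%:R) * (z ^+ 5 * (s ^+ 2 * k ^+ 3))) + (((670%:R * 1000%:R + 720%:R) * (z ^+ 5 * (s ^+ 3 * k ^+ 2))) + (((727%:R * 1000%:R + 40%:R) * (z ^+ 5 * (s ^+ 4 * k))) + (((290%:R * 1000%:R + 816%:R) * (z ^+ 5 * s ^+ 5)) + (((146%:R * 1000%:R + 944%:R) * (z ^+ 6 * (s * k ^+ 3))) + (((512%:R * 1000%:R + 512%:R) * (z ^+ 6 * (s ^+ 2 * k ^+ 2))) + (((731%:R * 1000%:R + 136%:R) * (z ^+ 6 * (s ^+ 3 * k))) + (((365%:R * 1000%:R + 568%:R) * (z ^+ 6 * s ^+ 4)) + (((226%:R * 1000%:R + 816%:R) * (z ^+ 7 * (s * k ^+ 2))) + (((477%:R * 1000%:R + 696%:R) * (z ^+ 7 * (s ^+ 2 * k))) + (((318%:R * 1000%:R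 + 464%:R) * (z ^+ 7 * s ^+ 3)) + (((182%:R * 1000%:R + 272%:R) * (z ^+ 8 * (s * k))) + (((182%:R * 1000%:R + 272%:R) * (z ^+ 8 * s ^+ 2)) + ((61%:R * 1000%:R + 440%:R) * (z ^+ 9 * s))))))))))))))))))))))))))))))))))))))))))))))))))))))))))); [rewrite /d19; ring | posi].
Qed.

Lemma dpos_aux (R : rcfType) (a b c z s k : R) : a = 2%:R * z + s -> b = 2%:R * z + s + k -> c = 2%:R * z + 2%:R * s + k -> 0 < z -> 0 <= s -> 0 < k -> 0 < (2%:R * z ^+ 2 - s ^+ 2 - s * k) ->
  0 < daux a b c.
Proof.
move=> ea eb ec hz hs hk hm; subst a b c.
apply: (@pos_eq _ _ (((2%:R * k ^+ 4) + ((24%:R * (z * k ^+ 3)) + ((52%:R * (z ^+ 2 * k ^+ 2)) + ((16%:R * (s * k ^+ 3)) + ((46%:R * (s ^+ 2 * k ^+ 2)) + ((60%:R * (s ^+ 3 * k)) + ((30%:R * s ^+ 4) + ((88%:R * (z * (s * k ^+ 2))) + ((120%:R * (z * (s ^+ 2 * k))) + ((80%:R * (z * s ^+ 3)) + ((52%:R * (z ^+ 2 * (s * k))) + (52%:R * (z ^+ 2 * s ^+ 2))))))))))))))); [rewrite /daux; ring | posi].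
Qed.

Lemma sym_n3 (R : rcfType) (a b c : R) : n3 a c b = n3 a b c.
Proof. rewrite /n3; ring. Qed.
Lemma sym_n9 (R : rcfType) (a b c : R) : n9 a c b = n9 a b c.
Proof. rewrite /n9; ring. Qed.
Lemma sym_n10 (R : rcfType) (a b c : R) : n10 a c b = n10 a b c.
Proof. rewrite /n10; ring. Qed.
Lemma sym_n2 (R : rcfType) (a b c : R) : n2 a c b = n2 a b c.
Proof. rewrite /n2; ring. Qed.
Lemma sym_n1 (R : rcfType) (a b c : R) : n1 a c b = n1 a b c.
Proof. rewrite /n1; ring. Qed.
Lemma sym_n6 (R : rcfType) (a b c : R) : n6 a c b = n6 a b c.
Proof. rewrite /n6; ring. Qed.
Lemma sym_n4 (R : rcfType) (a b c : R) : n4 a c b = n4 a b c.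
Proof. rewrite /n4; ring. Qed.
Lemma sym_n19 (R : rcfType) (a b c : R) : n19 a c b = n19 a b c.
Proof. rewrite /n19; ring. Qed.
Lemma sym_naux (R : rcfType) (a b c : R) : naux a c b = naux a b c.
Proof. rewrite /naux; ring. Qed.
Lemma sym_d3 (R : rcfType) (a b c : R) : d3 a c b = d3 a b c.
Proof. rewrite /d3; ring. Qed.
Lemma sym_d9 (R : rcfType) (a b c : R) : d9 a c b = d9 a b c.
Proof. rewrite /d9; ring. Qed.
Lemma sym_d10 (R : rcfType) (a b c : R) : d10 a c b = d10 a b c.
Proof. rewrite /d10; ring. Qed.
Lemma sym_d2 (R : rcfType) (a b c : R) : d2 a c b = d2 a b c.
Proof. rewrite /d2; ring. Qed.
Lemma sym_d1 (R : rcfType) (a b c : R) : d1 a c b = d1 a b c.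
Proof. rewrite /d1; ring. Qed.
Lemma sym_d6 (R : rcfType) (a b c : R) : d6 a c b = d6 a b c.
Proof. rewrite /d6; ring. Qed.
Lemma sym_d4 (R : rcfType) (a b c : R) : d4 a c b = d4 a b c.
Proof. rewrite /d4; ring. Qed.
Lemma sym_d19 (R : rcfType) (a b c : R) : d19 a c b = d19 a b c.
Proof. rewrite /d19; ring. Qed.
Lemma sym_daux (R : rcfType) (a b c : R) : daux a c b = daux a b c.
Proof. rewrite /daux; ring. Qed.
Lemma sym_eYhh (R : rcfType) (a b c : R) : eYhh a c b = eYhh a b c.
Proof. rewrite /eYhh; ring. Qed.
Lemma sym_eWhh (R : rcfType) (a b c : R) : eWhh a c b = eWhh a b c.
Proof. rewrite /eWhh; ring. Qed.
Lemma chain (R : rcfType) (a b c : R) : 0 <= a -> a < b -> a < c ->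
  0 < b^+2 + c^+2 - a^+2 -> 0 < c^+2 + a^+2 - b^+2 -> 0 < a^+2 + b^+2 - c^+2 ->
  n3 a b c / d3 a b c < n9 a b c / d9 a b c /\
  n9 a b c / d9 a b c < n10 a b c / d10 a b c /\
  n10 a b c / d10 a b c < n2 a b c / d2 a b c /\
  n2 a b c / d2 a b c < n1 a b c / d1 a b c /\
  n1 a b c / d1 a b c < n6 a b c / d6 a b c /\
  n6 a b c / d6 a b c < n4 a b c / d4 a b c /\
  n4 a b c / d4 a b c < n19 a b c / d19 a b c /\
  n19 a b c / d19 a b c < naux a b c / daux a b c /\
  0 < eYhh a b c /\ 0 < eWhh a b c.
Proof.
move=> ha hab hac hsa hsb hsc.
wlog hbc : b c hab hac hsa hsb hsc / b <= c.
  move=> W; have [h|h] := lerP b c; first exact: W.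
  have := W c b hac hab _ _ _ (ltW h).
  rewrite (sym_n3 _ a b c) (sym_d3 _ a b c) (sym_n9 _ a b c) (sym_d9 _ a b c)
    (sym_n10 _ a b c) (sym_d10 _ a b c) (sym_n2 _ a b c) (sym_d2 _ a b c)
    (sym_n1 _ a b c) (sym_d1 _ a b c) (sym_n6 _ a b c) (sym_d6 _ a b c)
    (sym_n4 _ a b c) (sym_d4 _ a b c) (sym_n19 _ a b c) (sym_d19 _ a b c)
    (sym_naux _ a b c) (sym_daux _ a b c) (sym_eYhh _ a b c) (sym_eWhh _ a b c).
  apply.
  - by rewrite (addrC (c^+2)).
  - by rewrite (addrC (b^+2)).
  - by rewrite (addrC (a^+2)).
have hb : 0 <= b by apply: ltW; apply: le_lt_trans hab.
have hc : 0 <= c by apply: ltW; apply: le_lt_trans hac.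
have hcab : c < a + b by nra.
have ea : a = 2%:R * ((a+b-c)/2%:R) + (c - b) by field.
have eb : b = 2%:R * ((a+b-c)/2%:R) + (c - b) + (b - a) by field.
have ec : c = 2%:R * ((a+b-c)/2%:R) + 2%:R * (c - b) + (b - a) by field.
have hz : 0 < (a+b-c)/2%:R by apply: divr_gt0; rewrite ?ltr0n // subr_gt0.
have hs : 0 <= c - b by rewrite subr_ge0.
have hk : 0 < b - a by rewrite subr_gt0.
have hm : 0 < 2%:R * ((a+b-c)/2%:R)^+2 - (c-b)^+2 - (c-b)*(b-a).
  have -> : 2%:R * ((a+b-c)/2%:R)^+2 - (c-b)^+2 - (c-b)*(b-a) = (a^+2+b^+2-c^+2)/2%:R by field.
  by apply: divr_gt0; rewrite ?ltr0n.
split; first exact: (@pr_3_9 R a b c _ _ _ ea eb ec hz hs hk hm).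
split; first exact: (@pr_9_10 R a b c _ _ _ ea eb ec hz hs hk hm).
split; first exact: (@pr_10_2 R a b c _ _ _ ea eb ec hz hs hk hm).
split; first exact: (@pr_2_1 R a b c _ _ _ ea eb ec hz hs hk hm).
split; first exact: (@pr_1_6 R a b c _ _ _ ea eb ec hz hs hk hm).
split; first exact: (@pr_6_4 R a b c _ _ _ ea eb ec hz hs hk hm).
split; first exact: (@pr_4_19 R a b c _ _ _ ea eb ec hz hs hk hm).
split; first exact: (@pr_19_aux R a b c _ _ _ ea eb ec hz hs hk hm).
split; first exact: (@ex_Yhh R a b c _ _ _ ea eb ec hz hs hk hm).
exact: (@ex_Whh R a b c _ _ _ ea eb ec hz hs hk hm).
Qed.

Lemma chain_d (R : rcfType) (a b c : R) : 0 <= a -> a < b -> a < c ->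
  0 < b^+2 + c^+2 - a^+2 -> 0 < c^+2 + a^+2 - b^+2 -> 0 < a^+2 + b^+2 - c^+2 ->
  0 < d3 a b c /\ 0 < d9 a b c /\ 0 < d10 a b c /\ 0 < d2 a b c /\ 0 < d1 a b c /\
  0 < d6 a b c /\ 0 < d4 a b c /\ 0 < d19 a b c /\ 0 < daux a b c.
Proof.
move=> ha hab hac hsa hsb hsc.
wlog hbc : b c hab hac hsa hsb hsc / b <= c.
  move=> W; have [h|h] := lerP b c; first exact: W.
  have := W c b hac hab _ _ _ (ltW h).
  rewrite (sym_d3 _ a b c) (sym_d9 _ a b c) (sym_d10 _ a b c) (sym_d2 _ a b c)
    (sym_d1 _ a b c) (sym_d6 _ a b c) (sym_d4 _ a b c) (sym_d19 _ a b c) (sym_daux _ a b c).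
  apply.
  - by rewrite (addrC (c^+2)).
  - by rewrite (addrC (b^+2)).
  - by rewrite (addrC (a^+2)).
have hb : 0 <= b by apply: ltW; apply: le_lt_trans hab.
have hc : 0 <= c by apply: ltW; apply: le_lt_trans hac.
have hcab : c < a + b by nra.
have ea : a = 2%:R * ((a+b-c)/2%:R) + (c - b) by field.
have eb : b = 2%:R * ((a+b-c)/2%:R) + (c - b) + (b - a) by field.
have ec : c = 2%:R * ((a+b-c)/2%:R) + 2%:R * (c - b) + (b - a) by field.
have hz : 0 < (a+b-c)/2%:R by apply: divr_gt0; rewrite ?ltr0n // subr_gt0.
have hs : 0 <= c - b by rewrite subr_ge0.
have hk : 0 < b - a by rewrite subr_gt0.
have hm : 0 < 2%:R * ((a+b-c)/2%:R)^+2 - (c-b)^+2 - (c-b)*(b-a).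
  have -> : 2%:R * ((a+b-c)/2%:R)^+2 - (c-b)^+2 - (c-b)*(b-a) = (a^+2+b^+2-c^+2)/2%:R by field.
  by apply: divr_gt0; rewrite ?ltr0n.
split; first exact: (@dpos_3 R a b c _ _ _ ea eb ec hz hs hk hm).
split; first exact: (@dpos_9 R a b c _ _ _ ea eb ec hz hs hk hm).
split; first exact: (@dpos_10 R a b c _ _ _ ea eb ec hz hs hk hm).
split; first exact: (@dpos_2 R a b c _ _ _ ea eb ec hz hs hk hm).
split; first exact: (@dpos_1 R a b c _ _ _ ea eb ec hz hs hk hm).
split; first exact: (@dpos_6 R a b c _ _ _ ea eb ec hz hs hk hm).
split; first exact: (@dpos_4 R a b c _ _ _ ea eb ec hz hs hk hm).
split; first exact: (@dpos_19 R a b c _ _ _ ea eb ec hz hs hk hm).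
exact: (@dpos_aux R a b c _ _ _ ea eb ec hz hs hk hm).
Qed.

Definition QQ {R : rcfType} (a b c u v w : R) : R :=
  (v^+2 * c^+2 + w^+2 * b^+2 + v * w * (b^+2 + c^+2 - a^+2)) / (u + v + w)^+2.

Lemma dist_sq {R : rcfType} (P Q : point R) :
  dist P Q ^+ 2 = (P.1 - Q.1)^+2 + (P.2 - Q.2)^+2.
Proof. by rewrite /dist sqr_sqrtr // addr_ge0 // sqr_ge0. Qed.

Lemma dist_bary (R : rcfType) (f : R -> R -> R -> R) (A B C : point R) :
  f (dist B C) (dist C A) (dist A B) + f (dist C A) (dist A B) (dist B C)
    + f (dist A B) (dist B C) (dist C A) != 0 ->
  dist A (bary f A B C) = Num.sqrt (QQ (dist B C) (dist C A) (dist A B)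
    (f (dist B C) (dist C A) (dist A B)) (f (dist C A) (dist A B) (dist B C))
    (f (dist A B) (dist B C) (dist C A))).
Proof.
rewrite /bary /=.
have ha := dist_sq B C; have hb := dist_sq C A; have hc := dist_sq A B.
move: (dist B C) (dist C A) (dist A B) ha hb hc => a b c ha hb hc.
move: (f a b c) (f b c a) (f c a b) => u v w hs.
rewrite /dist /QQ ha hb hc; congr Num.sqrt => /=.
by field.
Qed.

Lemma QQ_scale (R : rcfType) (a b c u v w l : R) : l != 0 -> u + v + w != 0 ->
  QQ a b c (l * u) (l * v) (l * w) = QQ a b c u v w.
Proof.
move=> hl hs; rewrite /QQ -!mulrDr.
by field; rewrite hs hl.
Qed.

Lemma sum_nz {R : rcfType} {u v w d e : R} :
  (u + v + w)^+2 = d * e -> e != 0 -> d != 0 -> u + v + w != 0.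
Proof. by move=> h he hd; rewrite -sqrf_eq0 h mulf_neq0. Qed.

Lemma d_gen (R : rcfType) (f : R -> R -> R -> R) (A B C : point R) (l n d e : R) :
  (l * f (dist B C) (dist C A) (dist A B) + l * f (dist C A) (dist A B) (dist B C)
    + l * f (dist A B) (dist B C) (dist C A))^+2 = d * e ->
  (l * f (dist C A) (dist A B) (dist B C))^+2 * (dist A B)^+2
  + (l * f (dist A B) (dist B C) (dist C A))^+2 * (dist C A)^+2
  + (l * f (dist C A) (dist A B) (dist B C)) * (l * f (dist A B) (dist B C) (dist C A))
    * ((dist C A)^+2 + (dist A B)^+2 - (dist B C)^+2) = n * e ->
  l != 0 -> e != 0 -> d != 0 ->
  dist A (bary f A B C) = Num.sqrt (n / d).
Proof.
move=> h1 h2 hl he hd.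
have hs := sum_nz h1 he hd.
have hs' : f (dist B C) (dist C A) (dist A B) + f (dist C A) (dist A B) (dist B C)
    + f (dist A B) (dist B C) (dist C A) != 0.
  by move: hs; rewrite -!mulrDr mulf_eq0 negb_or => /andP[].
rewrite dist_bary // -(@QQ_scale R _ _ _ _ _ _ _ hl hs'); congr Num.sqrt.
rewrite /QQ h1 h2.
by field; rewrite he hd.
Qed.
Lemma dX3 (R : rcfType) (A B C : point R) : 0 < d3 (dist B C) (dist C A) (dist A B) -> 
  dist A (bary (@X3 R) A B C) = Num.sqrt (n3 (dist B C) (dist C A) (dist A B) / d3 (dist B C) (dist C A) (dist A B)).
Proof.
move=> hd .
apply: (@d_gen R (@X3 R) A B C (1) _ _ (d3 (dist B C) (dist C A) (dist A B))).
- by rewrite /X3 /d3 ; ring.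
- by rewrite /X3 /n3 /d3 ; ring.
- by rewrite oner_neq0.
- by rewrite gt_eqF.
- by rewrite gt_eqF.
Qed.

Lemma dX9 (R : rcfType) (A B C : point R) : 0 < d9 (dist B C) (dist C A) (dist A B) -> 
  dist A (bary (@X9 R) A B C) = Num.sqrt (n9 (dist B C) (dist C A) (dist A B) / d9 (dist B C) (dist C A) (dist A B)).
Proof.
move=> hd .
apply: (@d_gen R (@X9 R) A B C (1) _ _ (1)).
- by rewrite /X9 /d9 ; ring.
- by rewrite /X9 /n9 /d9 ; ring.
- by rewrite oner_neq0.
- by rewrite oner_neq0.
- by rewrite gt_eqF.
Qed.

Lemma dX10 (R : rcfType) (A B C : point R) : 0 < d10 (dist B C) (dist C A) (dist A B) -> 0 < (dist B C) + (dist C A) + (dist A B) ->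
  dist A (bary (@X10 R) A B C) = Num.sqrt (n10 (dist B C) (dist C A) (dist A B) / d10 (dist B C) (dist C A) (dist A B)).
Proof.
move=> hd hx.
apply: (@d_gen R (@X10 R) A B C (1) _ _ ((dist B C) + (dist C A) + (dist A B))).
- by rewrite /X10 /d10 ; ring.
- by rewrite /X10 /n10 /d10 ; ring.
- by rewrite oner_neq0.
- by rewrite gt_eqF.
- by rewrite gt_eqF.
Qed.

Lemma dX2 (R : rcfType) (A B C : point R) : 0 < d2 (dist B C) (dist C A) (dist A B) -> 
  dist A (bary (@X2 R) A B C) = Num.sqrt (n2 (dist B C) (dist C A) (dist A B) / d2 (dist B C) (dist C A) (dist A B)).
Proof.
move=> hd .
apply: (@d_gen R (@X2 R) A B C (1) _ _ (1)).
- by rewrite /X2 /d2 ; ring.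
- by rewrite /X2 /n2 /d2 ; ring.
- by rewrite oner_neq0.
- by rewrite oner_neq0.
- by rewrite gt_eqF.
Qed.

Lemma dX1 (R : rcfType) (A B C : point R) : 0 < d1 (dist B C) (dist C A) (dist A B) -> 
  dist A (bary (@X1 R) A B C) = Num.sqrt (n1 (dist B C) (dist C A) (dist A B) / d1 (dist B C) (dist C A) (dist A B)).
Proof.
move=> hd .
apply: (@d_gen R (@X1 R) A B C (1) _ _ (d1 (dist B C) (dist C A) (dist A B))).
- by rewrite /X1 /d1 ; ring.
- by rewrite /X1 /n1 /d1 ; ring.
- by rewrite oner_neq0.
- by rewrite gt_eqF.
- by rewrite gt_eqF.
Qed.

Lemma dX6 (R : rcfType) (A B C : point R) : 0 < d6 (dist B C) (dist C A) (dist A B) -> 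
  dist A (bary (@X6 R) A B C) = Num.sqrt (n6 (dist B C) (dist C A) (dist A B) / d6 (dist B C) (dist C A) (dist A B)).
Proof.
move=> hd .
apply: (@d_gen R (@X6 R) A B C (1) _ _ (1)).
- by rewrite /X6 /d6 ; ring.
- by rewrite /X6 /n6 /d6 ; ring.
- by rewrite oner_neq0.
- by rewrite oner_neq0.
- by rewrite gt_eqF.
Qed.

Lemma dX4 (R : rcfType) (A B C : point R) :
  0 < d4 (dist B C) (dist C A) (dist A B) ->
  0 < dist C A ^+ 2 + dist A B ^+ 2 - dist B C ^+ 2 ->
  0 < dist A B ^+ 2 + dist B C ^+ 2 - dist C A ^+ 2 ->
  0 < dist B C ^+ 2 + dist C A ^+ 2 - dist A B ^+ 2 ->
  dist A (bary (@X4 R) A B C) = Num.sqrt (n4 (dist B C) (dist C A) (dist A B) / d4 (dist B C) (dist C A) (dist A B)).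
Proof.
move=> hd h1 h2 h3.
have n1 := lt0r_neq0 h1; have n2 := lt0r_neq0 h2; have n3 := lt0r_neq0 h3.
apply: (@d_gen R (@X4 R) A B C ((dist C A ^+ 2 + dist A B ^+ 2 - dist B C ^+ 2) *
  (dist A B ^+ 2 + dist B C ^+ 2 - dist C A ^+ 2) * (dist B C ^+ 2 + dist C A ^+ 2 - dist A B ^+ 2)) _ _ (d4 (dist B C) (dist C A) (dist A B))).
- by rewrite /X4 /d4; field; rewrite ?n1 ?n2 ?n3.
- by rewrite /X4 /n4 /d4; field; rewrite ?n1 ?n2 ?n3.
- by rewrite !mulf_neq0.
- by rewrite gt_eqF.
- by rewrite gt_eqF.
Qed.

Lemma dX19 (R : rcfType) (A B C : point R) :
  0 < d19 (dist B C) (dist C A) (dist A B) ->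
  0 < dist C A ^+ 2 + dist A B ^+ 2 - dist B C ^+ 2 ->
  0 < dist A B ^+ 2 + dist B C ^+ 2 - dist C A ^+ 2 ->
  0 < dist B C ^+ 2 + dist C A ^+ 2 - dist A B ^+ 2 ->
  dist A (bary (@X19 R) A B C) = Num.sqrt (n19 (dist B C) (dist C A) (dist A B) / d19 (dist B C) (dist C A) (dist A B)).
Proof.
move=> hd h1 h2 h3.
have n1 := lt0r_neq0 h1; have n2 := lt0r_neq0 h2; have n3 := lt0r_neq0 h3.
apply: (@d_gen R (@X19 R) A B C ((dist C A ^+ 2 + dist A B ^+ 2 - dist B C ^+ 2) *
  (dist A B ^+ 2 + dist B C ^+ 2 - dist C A ^+ 2) * (dist B C ^+ 2 + dist C A ^+ 2 - dist A B ^+ 2)) _ _ 1).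
- by rewrite /X19 /d19; field; rewrite ?n1 ?n2 ?n3.
- by rewrite /X19 /n19 /d19; field; rewrite ?n1 ?n2 ?n3.
- by rewrite !mulf_neq0.
- by rewrite oner_neq0.
- by rewrite gt_eqF.
Qed.

Definition radE {R : rcfType} (a b c : R) : R :=
  2 * a^+2 * b^+2 + 2 * b^+2 * c^+2 + 2 * c^+2 * a^+2 - a^+4 - b^+4 - c^+4.
Definition WW {R : rcfType} (a b c : R) : R :=
  a^+2 + b^+2 + c^+2 - Num.sqrt 3 * Num.sqrt (radE a b c).

Lemma sarea_eqs (R : rcfType) (a b c : R) :
  [/\ Sarea a b c = Num.sqrt (radE a b c) / 2, Sarea b c a = Num.sqrt (radE a b c) / 2
    & Sarea c a b = Num.sqrt (radE a b c) / 2].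
Proof.
rewrite /Sarea /radE; split => //; congr (Num.sqrt _ / _); ring.
Qed.

Lemma x16_sum (R : rcfType) (a b c : R) : 0 <= radE a b c ->
  2 * X16 a b c + 2 * X16 b c a + 2 * X16 c a b =
  Num.sqrt (radE a b c) * WW a b c.
Proof.
move=> hr; have hT := sqr_sqrtr hr.
have ht : Num.sqrt 3 ^+ 2 = 3 :> R by rewrite sqr_sqrtr // ler0n.
case: (sarea_eqs _ a b c) => e0 e1 e2.
rewrite /X16 e0 e1 e2 /SA /WW.
move: (Num.sqrt (radE a b c)) (Num.sqrt 3) hT ht => T t hT ht.
apply/eqP; rewrite -subr_eq0; apply/eqP.
transitivity (t * (T^+2 - radE a b c)); first by rewrite /radE; field.
by rewrite hT subrr mulr0.
Qed.

Lemma x16_num (R : rcfType) (a b c : R) : 0 <= radE a b c ->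
  (2 * X16 b c a)^+2 * c^+2 + (2 * X16 c a b)^+2 * b^+2
  + (2 * X16 b c a) * (2 * X16 c a b) * (b^+2 + c^+2 - a^+2) =
  2 * b^+2 * c^+2 * (Num.sqrt (radE a b c) ^+ 2 * WW a b c).
Proof.
move=> hr; have hT := sqr_sqrtr hr.
have ht : Num.sqrt 3 ^+ 2 = 3 :> R by rewrite sqr_sqrtr // ler0n.
case: (sarea_eqs _ a b c) => e0 e1 e2.
rewrite /X16 e1 e2 /SA /WW.
move: (Num.sqrt (radE a b c)) (Num.sqrt 3) hT ht => T t hT ht.
apply/eqP; rewrite -subr_eq0; apply/eqP.
transitivity ((T^+2 - radE a b c) * (- 3 * a^+2 * b^+2 * c^+2 + 2 * b^+2 * c^+2 * T * t)
  + (t^+2 - 3) * (a^+2 * b^+2 * c^+2 * radE a b c)); first by rewrite /radE; field.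
by rewrite hT ht !subrr !mul0r addr0.
Qed.

Lemma dX16 (R : rcfType) (A B C : point R) :
  0 < radE (dist B C) (dist C A) (dist A B) -> 0 < WW (dist B C) (dist C A) (dist A B) ->
  dist A (bary (@X16 R) A B C) =
  Num.sqrt (2 * dist C A ^+ 2 * dist A B ^+ 2 / WW (dist B C) (dist C A) (dist A B)).
Proof.
move=> hr hw.
apply: (@d_gen R (@X16 R) A B C 2 _ _
  (Num.sqrt (radE (dist B C) (dist C A) (dist A B)) ^+ 2 * WW (dist B C) (dist C A) (dist A B))).
- by rewrite x16_sum ?ltW //; ring.
- by rewrite x16_num ?ltW.
- by rewrite pnatr_eq0.
- by rewrite mulf_neq0 // ?sqr_sqrtr ?ltW // gt_eqF.
- by rewrite gt_eqF.
Qed.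

Lemma sqrt_lt (R : rcfType) (x y : R) : 0 <= x -> x < y -> Num.sqrt x < Num.sqrt y.
Proof. by move=> hx hxy; rewrite ltr_sqrt // (le_lt_trans hx). Qed.

Lemma aux_pos (R : rcfType) (a b c : R) : 0 <= a -> a < b -> a < c ->
  0 < b^+2 + c^+2 - a^+2 -> 0 < c^+2 + a^+2 - b^+2 -> 0 < a^+2 + b^+2 - c^+2 ->
  0 < radE a b c /\ 0 < WW a b c /\ 0 < a + b + c.
Proof.
move=> ha hab hac hsa hsb hsc.
have [D3 _] := @chain_d R a b c ha hab hac hsa hsb hsc.
have [_ [_ [_ [_ [_ [_ [_ [_ [hY hW]]]]]]]]] := @chain R a b c ha hab hac hsa hsb hsc.
have hr : 0 < radE a b c by move: D3; rewrite /radE /d3; congr (_ < _); ring.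
split => //.
have hb : 0 < b by apply: le_lt_trans hab.
have hc : 0 < c by apply: le_lt_trans hac.
split; last by lra.
set r := Num.sqrt 3 * Num.sqrt (radE a b c).
have r0 : 0 <= r by rewrite mulr_ge0 ?sqrtr_ge0.
have hr2 : r ^+ 2 = 3 * radE a b c by rewrite exprMn !sqr_sqrtr ?ler0n ?ltW.
have w0 : 0 < a^+2 + b^+2 + c^+2.
  by apply: ltr_wpDl; [exact: addr_ge0 (sqr_ge0 a) (sqr_ge0 b) | exact: exprn_gt0].
have : 0 < (a^+2 + b^+2 + c^+2 - r) * (a^+2 + b^+2 + c^+2 + r).
  have -> : (a^+2 + b^+2 + c^+2 - r) * (a^+2 + b^+2 + c^+2 + r) = eWhh a b c.
    rewrite /eWhh; apply/eqP; rewrite -subr_eq0; apply/eqP.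
    transitivity (3 * radE a b c - r^+2); first by rewrite /radE; ring.
    by rewrite hr2 subrr.
  exact: hW.
by rewrite /WW -/r pmulr_lgt0 // (ltr_wpDr r0 w0).
Qed.

Lemma final (R : rcfType) (a b c : R) : 0 <= a -> a < b -> a < c ->
  0 < b^+2 + c^+2 - a^+2 -> 0 < c^+2 + a^+2 - b^+2 -> 0 < a^+2 + b^+2 - c^+2 ->
  Num.sqrt (n3 a b c / d3 a b c) < Num.sqrt (n9 a b c / d9 a b c) /\
  Num.sqrt (n9 a b c / d9 a b c) < Num.sqrt (n10 a b c / d10 a b c) /\
  Num.sqrt (n10 a b c / d10 a b c) < Num.sqrt (n2 a b c / d2 a b c) /\
  Num.sqrt (n2 a b c / d2 a b c) < Num.sqrt (n1 a b c / d1 a b c) /\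
  Num.sqrt (n1 a b c / d1 a b c) < Num.sqrt (n6 a b c / d6 a b c) /\
  Num.sqrt (n6 a b c / d6 a b c) < Num.sqrt (n4 a b c / d4 a b c) /\
  Num.sqrt (n4 a b c / d4 a b c) < Num.sqrt (n19 a b c / d19 a b c) /\
  Num.sqrt (n19 a b c / d19 a b c) < Num.sqrt (2 * b ^+ 2 * c ^+ 2 / WW a b c).
Proof.
move=> ha hab hac hsa hsb hsc.
have [D3 [D9 [D10 [D2 [D1 [D6 [D4 [D19 Daux]]]]]]]] := @chain_d R a b c ha hab hac hsa hsb hsc.
have [c1 [c2 [c3 [c4 [c5 [c6 [c7 [c8 [hY hW]]]]]]]]] := @chain R a b c ha hab hac hsa hsb hsc.
have [hr [hw hs]] := @aux_pos R a b c ha hab hac hsa hsb hsc.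
have hb : 0 < b by apply: le_lt_trans hab.
have hc : 0 < c by apply: le_lt_trans hac.
have q3 : 0 <= n3 a b c / d3 a b c.
  apply: divr_ge0; last exact: ltW.
  by rewrite /n3; apply: mulr_ge0; [apply: mulr_ge0|]; exact: sqr_ge0.
have q9 := le_lt_trans q3 c1.
have q10 := le_lt_trans (ltW q9) c2.
have q2 := le_lt_trans (ltW q10) c3.
have q1 := le_lt_trans (ltW q2) c4.
have q6 := le_lt_trans (ltW q1) c5.
have q4 := le_lt_trans (ltW q6) c6.
have q19 := le_lt_trans (ltW q4) c7.
do 7 (split; first by apply: sqrt_lt => //; apply: ltW).
apply: sqrt_lt; first exact: ltW.
apply: (lt_le_trans c8).
set r := Num.sqrt 3 * Num.sqrt (radE a b c).
have r0 : 0 <= r by rewrite mulr_ge0 ?sqrtr_ge0.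
have hr2 : r ^+ 2 = 3 * radE a b c by rewrite exprMn !sqr_sqrtr ?ler0n ?ltW.
set Y := a * b + b * c + c * a.
have Y0 : 0 < Y.
  rewrite /Y; apply: ltr_wpDr; first exact: mulr_ge0 (ltW hc) ha.
  apply: ltr_wpDl; first exact: mulr_ge0 ha (ltW hb).
  exact: mulr_gt0.
have hYr : 0 < Y - r.
  have : 0 < (Y - r) * (Y + r).
    have -> : (Y - r) * (Y + r) = eYhh a b c.
      rewrite /eYhh; apply/eqP; rewrite -subr_eq0; apply/eqP.
      transitivity (3 * radE a b c - r^+2); first by rewrite /Y /radE; ring.
      by rewrite hr2 subrr.
    exact: hY.
  by rewrite pmulr_lgt0 // (ltr_wpDr r0 Y0).
rewrite ler_pdivrMr // mulrAC ler_pdivlMr // -subr_ge0.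
have -> : 2 * b ^+ 2 * c ^+ 2 * daux a b c - naux a b c * WW a b c =
  2 * b ^+ 2 * c ^+ 2 * (r * (Y - r)) + 2 * b ^+ 2 * c ^+ 2 * (r ^+ 2 - 3 * radE a b c).
  by rewrite /daux /naux /WW /radE /Y -/r; ring.
rewrite hr2 subrr mulr0 addr0.
apply: mulr_ge0; last by apply: mulr_ge0 => //; exact: ltW.
by apply: mulr_ge0; [apply: mulr_ge0|]; rewrite ?ler0n ?sqr_ge0.
Qed.

Theorem theorem4p1 (R : rcfType) (A B C : point R) :
  acute_triangle A B C ->
  dist B C < dist C A -> dist B C < dist A B ->
  let d f := dist A (bary f A B C) in
  d (@X3 R) < d (@X9 R) /\ d (@X9 R) < d (@X10 R) /\ d (@X10 R) < d (@X2 R) /\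
  d (@X2 R) < d (@X1 R) /\ d (@X1 R) < d (@X6 R) /\ d (@X6 R) < d (@X4 R) /\
  d (@X4 R) < d (@X19 R) /\ d (@X19 R) < d (@X16 R).
Proof.
case=> _ h1 h2 h3 hab hac d.
have ha2 := dist_sq B C; have hb2 := dist_sq C A; have hc2 := dist_sq A B.
have hsa : 0 < dist C A ^+ 2 + dist A B ^+ 2 - dist B C ^+ 2.
  have -> : dist C A ^+ 2 + dist A B ^+ 2 - dist B C ^+ 2 = 2 * dotv A B C.
    by rewrite ha2 hb2 hc2 /dotv; ring.
  by rewrite mulr_gt0.
have hsb : 0 < dist A B ^+ 2 + dist B C ^+ 2 - dist C A ^+ 2.
  have -> : dist A B ^+ 2 + dist B C ^+ 2 - dist C A ^+ 2 = 2 * dotv B C A.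
    by rewrite ha2 hb2 hc2 /dotv; ring.
  by rewrite mulr_gt0.
have hsc : 0 < dist B C ^+ 2 + dist C A ^+ 2 - dist A B ^+ 2.
  have -> : dist B C ^+ 2 + dist C A ^+ 2 - dist A B ^+ 2 = 2 * dotv C A B.
    by rewrite ha2 hb2 hc2 /dotv; ring.
  by rewrite mulr_gt0.
have ha0 : 0 <= dist B C by exact: sqrtr_ge0.
have [D3 [D9 [D10 [D2 [D1 [D6 [D4 [D19 Daux]]]]]]]] :=
  @chain_d R _ _ _ ha0 hab hac hsa hsb hsc.
have [hr [hw hs]] := @aux_pos R _ _ _ ha0 hab hac hsa hsb hsc.
rewrite /d (@dX3 R A B C D3) (@dX9 R A B C D9) (@dX10 R A B C D10 hs) (@dX2 R A B C D2) (@dX1 R A B C D1) (@dX6 R A B C D6)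
  (@dX4 R A B C D4 hsa hsb hsc) (@dX19 R A B C D19 hsa hsb hsc) (@dX16 R A B C hr hw).
exact: (@final R _ _ _ ha0 hab hac hsa hsb hsc).
Qed.
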